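(* Let $(V_4,g)$ be an oriented space-time with Ricci tensor $R$ and self-dual Weyl tensor $\mathcal W$. (i) Let $\mathcal U$ be a normalized self-dual bivector, $\mathcal U=\frac1{\sqrt2}(U-i*U)$ with $U$ a simple unit 2-form, and $\Pi=2\,\mathcal U\cdot\bar{\mathcal U}$. Then $R$ is algebraically of Einstein–Maxwell type with unitary principal bivector $\mathcal U$ (i.e. $R=-\kappa\Pi$ for some nonvanishing function $\kappa$) if and only if $R\neq0$, $\mathrm{tr}R=0$ and $R\cdot\mathcal U=\mathcal U\cdot R$. (ii) Let $\Pi=v-h$ be the structure tensor of a 2+2 almost-product structure (time-like plane with projector $v$, space-like orthogonal plane with projector $h$). Then the space-time is of Petrov–Bel type D with principal structure $\Pi$ if and only if $$a\neq0,\qquad \Pi^{\mu}{}_{(\lambda}\mathcal P_{\nu)\mu\gamma\delta}=0,\qquad \mathcal P\equiv\mathcal W+\frac ba\mathcal G,$$ where $a=\mathrm{Tr}\mathcal W^2$, $b=\mathrm{Tr}\mathcal W^3$.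
   Context: Signature $(-,+,+,+)$; curvature conventions as in Kramer et al. For 2-tensors, $(A\cdot B)^\alpha{}_\beta=A^\alpha{}_\mu B^\mu{}_\beta$, $\mathrm{tr}A=A^\alpha{}_\alpha$; bar denotes complex conjugation. For double 2-forms, $(P\circ Q)^{\alpha\beta}{}_{\rho\sigma}=\frac12P^{\alpha\beta}{}_{\mu\nu}Q^{\mu\nu}{}_{\rho\sigma}$, $P^2=P\circ P$, $\mathrm{Tr}P=\frac12P^{\alpha\beta}{}_{\alpha\beta}$. $*$ is the Hodge dual ($*F=\eta(F)$, $*W=\eta\circ W$), $\eta$ the volume element, $G=\frac12g\wedge g$ with $(A\wedge B)_{\alpha\beta\mu\nu}=A_{\alpha\mu}B_{\beta\nu}+A_{\beta\nu}B_{\alpha\mu}-A_{\alpha\nu}B_{\beta\mu}-A_{\beta\mu}B_{\alpha\nu}$; $\mathcal G=\frac12(G-i\eta)$, $\mathcal W=\frac12(W-i*W)$. For a simple unit 2-form $U$ with time-like plane $V$ (volume element $U$) and orthogonal complement $H$, $v=U^2$, $h=-( *U)^2$ are the projectors and $\Pi=v-h=2\mathcal U\cdot\bar{\mathcal U}$. Type D: $\mathcal W$ has a double eigenvalue and minimal polynomial of degree two, i.e. $\mathcal W=3\rho\,\mathcal U\otimes\mathcal U+\rho\mathcal G$, $\rho=-b/a$; its principal structure is $\Pi=2\mathcal U\cdot\bar{\mathcal U}$ built from this canonical bivector $\mathcal U$. *)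

(* Defs.v *)
(* Pointwise (tangent-space) formalization in a positively
   oriented orthonormal frame of signature (-,+,+,+).  All tensors are given
   by their fully covariant components; indices are raised with eta. *)
From HB Require Import structures.
From mathcomp Require Import all_boot all_order all_algebra.
From mathcomp Require Import complex.
Set Implicit Arguments. Unset Strict Implicit. Unset Printing Implicit Defensive.
Import Order.TTheory GRing.Theory Num.Theory.
Local Open Scope ring_scope.

Notation idx := 'I_4.

Section Defs.
Variable K : rcfType.
Notation C := (K[i]).

Definition toC (x : K) : C := Complex x 0.
Definition ci : C := Complex 0 1.
Definition cconj (z : C) : C := conjc z.

Definition tensor2 := idx -> idx -> C.
Definition tensor4 := idx -> idx -> idx -> idx -> C.

Definition gm (a b : idx) : C :=
  if a == b then (if val a == 0%N then -1 else 1) else 0.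

(* volume element eta_{abcd}, eta_{0123} = 1 *)
Definition zi (a : idx) : int := (val a)%:Z.
Definition vol (a b c d : idx) : C :=
  (((zi b - zi a) * (zi c - zi a) * (zi d - zi a) * (zi c - zi b)
    * (zi d - zi b) * (zi d - zi c))%:~R) / 12%:R.

Definition realT2 (A : idx -> idx -> K) : tensor2 := fun a b => toC (A a b).
Definition realT4 (A : idx -> idx -> idx -> idx -> K) : tensor4 :=
  fun a b c d => toC (A a b c d).

Definition dot2 (A B : tensor2) : tensor2 :=
  fun a b => \sum_(m : idx) \sum_(n : idx) A a m * gm m n * B n b.
Definition tr2 (A : tensor2) : C := \sum_(a : idx) \sum_(b : idx) gm a b * A a b.
Definition conj2 (A : tensor2) : tensor2 := fun a b => cconj (A a b).
Definition scale2 (k : C) (A : tensor2) : tensor2 := fun a b => k * A a b.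

Definition hdual2 (F : tensor2) : tensor2 :=
  fun a b => 2%:R^-1 * \sum_(c : idx) \sum_(d : idx) \sum_(c' : idx) \sum_(d' : idx)
     vol a b c d * gm c c' * gm d d' * F c' d'.

Definition comp4 (P Q : tensor4) : tensor4 :=
  fun a b r s => 2%:R^-1 * \sum_(m : idx) \sum_(n : idx) \sum_(m' : idx) \sum_(n' : idx)
     P a b m n * gm m m' * gm n n' * Q m' n' r s.
Definition Tr4 (P : tensor4) : C :=
  2%:R^-1 * \sum_(a : idx) \sum_(b : idx) \sum_(c : idx) \sum_(d : idx)
     gm a c * gm b d * P a b c d.
Definition volT : tensor4 := vol.
Definition hdual4 (W : tensor4) : tensor4 := comp4 volT W.
Definition wedge (A B : tensor2) : tensor4 :=
  fun a b m n => A a m * B b n + A b n * B a m - A a n * B b m - A b m * B a n.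
Definition Gt : tensor4 := fun a b c d => 2%:R^-1 * wedge gm gm a b c d.
Definition sdG : tensor4 := fun a b c d => 2%:R^-1 * (Gt a b c d - ci * volT a b c d).
Definition sdW (W : tensor4) : tensor4 :=
  fun a b c d => 2%:R^-1 * (W a b c d - ci * hdual4 W a b c d).
Definition tens22 (A B : tensor2) : tensor4 := fun a b c d => A a b * B c d.

(* simple unit 2-form with time-like plane *)
Definition simple_unit_2form (U : idx -> idx -> K) : Prop :=
  (forall a b, U a b = - U b a) /\
  (forall a b c d, U a b * U c d + U a c * U d b + U a d * U b c = 0) /\
  2%:R^-1 * (\sum_(a : idx) \sum_(b : idx) \sum_(a' : idx) \sum_(b' : idx)
       realT2 U a b * gm a a' * gm b b' * realT2 U a' b') = -1.

Definition sdU (U : idx -> idx -> K) : tensor2 :=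
  fun a b => (toC (Num.sqrt 2%:R))^-1 * (realT2 U a b - ci * hdual2 (realT2 U) a b).

Definition PiU (U : idx -> idx -> K) : tensor2 :=
  scale2 2%:R (dot2 (sdU U) (conj2 (sdU U))).

Definition proj_v (U : idx -> idx -> K) : tensor2 := dot2 (realT2 U) (realT2 U).
Definition proj_h (U : idx -> idx -> K) : tensor2 :=
  fun a b => - dot2 (hdual2 (realT2 U)) (hdual2 (realT2 U)) a b.
Definition Pi_vh (U : idx -> idx -> K) : tensor2 :=
  fun a b => proj_v U a b - proj_h U a b.

Definition EM_type (Ric : idx -> idx -> K) (U : idx -> idx -> K) : Prop :=
  exists kappa : K, kappa != 0 /\ realT2 Ric = scale2 (- toC kappa) (PiU U).

Definition weyl_tensor (W : idx -> idx -> idx -> idx -> K) : Prop :=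
  (forall a b c d, W a b c d = - W b a c d) /\
  (forall a b c d, W a b c d = W c d a b) /\
  (forall a b c d, W a b c d + W a c d b + W a d b c = 0) /\
  (forall a c, \sum_(b : idx) \sum_(d : idx) gm b d * realT4 W a b c d = 0).

Definition a_inv (W : idx -> idx -> idx -> idx -> K) : C :=
  Tr4 (comp4 (sdW (realT4 W)) (sdW (realT4 W))).
Definition b_inv (W : idx -> idx -> idx -> idx -> K) : C :=
  Tr4 (comp4 (sdW (realT4 W)) (comp4 (sdW (realT4 W)) (sdW (realT4 W)))).

Definition typeD_principal (W : idx -> idx -> idx -> idx -> K) (Pi : tensor2) : Prop :=
  exists U : idx -> idx -> K, simple_unit_2form U /\ PiU U = Pi /\
    let rho := - b_inv W / a_inv W in
    rho != 0 /\
    sdW (realT4 W) = (fun a b c d => 3%:R * rho * tens22 (sdU U) (sdU U) a b c d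
                                     + rho * sdG a b c d).

Definition Ptens (W : idx -> idx -> idx -> idx -> K) : tensor4 :=
  fun a b c d => sdW (realT4 W) a b c d + b_inv W / a_inv W * sdG a b c d.

Definition symPiP (Pi : tensor2) (P : tensor4) (l n g d : idx) : C :=
  2%:R^-1 * \sum_(mu : idx) \sum_(m : idx)
    (gm mu m * Pi m l * P n mu g d + gm mu m * Pi m n * P l mu g d).

End Defs.

(* Main.v *)
Require Import Defs.
From HB Require Import structures.
From mathcomp Require Import all_boot all_order all_algebra.
From mathcomp Require Import complex.
From mathcomp Require Import ring lra.
From Stdlib Require Import FunctionalExtensionality.
Set Implicit Arguments. Unset Strict Implicit. Unset Printing Implicit Defensive.
Import Order.TTheory GRing.Theory Num.Theory.
Local Open Scope complex_scope.
Local Open Scope ring_scope.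

Definition i0 : idx := @Ordinal 4 0 isT.
Definition i1 : idx := @Ordinal 4 1 isT.
Definition i2 : idx := @Ordinal 4 2 isT.
Definition i3 : idx := @Ordinal 4 3 isT.

Lemma sum4 (R : nmodType) (F : idx -> R) : \sum_(i : idx) F i = F i0 + F i1 + F i2 + F i3.
Proof.
rewrite !big_ord_recl big_ord0 addr0 !addrA.
by congr (_ + _ + _ + _); congr F; apply: val_inj.
Qed.

Lemma idx_ind (P : idx -> Prop) : P i0 -> P i1 -> P i2 -> P i3 -> forall a, P a.
Proof.
move=> h0 h1 h2 h3 [[|[|[|[|n]]]] Hn].
- by rewrite (_ : Ordinal Hn = i0) //; apply: val_inj.
- by rewrite (_ : Ordinal Hn = i1) //; apply: val_inj.
- by rewrite (_ : Ordinal Hn = i2) //; apply: val_inj.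
- by rewrite (_ : Ordinal Hn = i3) //; apply: val_inj.
- by [].
Qed.

Ltac idxcase a := elim/idx_ind: a.

Section Base.
Variable K : rcfType.
Local Notation C := (K[i]).
Local Notation gm := (@gm K).
Local Notation vol := (@vol K).

Definition vtab (a b c d : idx) : C :=
  match val a, val b, val c, val d with
  | 0, 1, 2, 3 => 1
  | 0, 1, 3, 2 => -1
  | 0, 2, 1, 3 => -1
  | 0, 2, 3, 1 => 1
  | 0, 3, 1, 2 => 1
  | 0, 3, 2, 1 => -1
  | 1, 0, 2, 3 => -1
  | 1, 0, 3, 2 => 1
  | 1, 2, 0, 3 => 1
  | 1, 2, 3, 0 => -1
  | 1, 3, 0, 2 => -1
  | 1, 3, 2, 0 => 1
  | 2, 0, 1, 3 => 1
  | 2, 0, 3, 1 => -1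
  | 2, 1, 0, 3 => -1
  | 2, 1, 3, 0 => 1
  | 2, 3, 0, 1 => 1
  | 2, 3, 1, 0 => -1
  | 3, 0, 1, 2 => -1
  | 3, 0, 2, 1 => 1
  | 3, 1, 0, 2 => 1
  | 3, 1, 2, 0 => -1
  | 3, 2, 0, 1 => -1
  | 3, 2, 1, 0 => 1  | _, _, _, _ => 0
  end.

Lemma volE a b c d : vol a b c d = vtab a b c d.
Proof.
idxcase a; idxcase b; idxcase c; idxcase d; rewrite /vol /zi /vtab /=;
  by field.
Qed.


Definition s (a : idx) : C := gm a a.

Lemma gmE a b : gm a b = if a == b then s a else 0.
Proof. by rewrite /s /Defs.gm; case: eqP => // ->; rewrite eqxx. Qed.

Lemma s_sq a : s a * s a = 1.
Proof. by idxcase a; rewrite /s /Defs.gm /= ?mulrNN mulr1. Qed.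

Lemma sum_collapse (F : idx -> C) m : (forall n, n != m -> F n = 0) -> \sum_n F n = F m.
Proof. by move=> H; rewrite (bigD1 m) //= big1 ?addr0 // => n /H. Qed.

Lemma dot2E (A B : tensor2 K) a b : dot2 A B a b = \sum_m A a m * s m * B m b.
Proof.
apply: eq_bigr => m _; rewrite (sum_collapse (m:=m)); first by rewrite /s.
by move=> n hn; rewrite gmE ifN_eqC // mulr0 mul0r.
Qed.

Lemma hdual2E (F : tensor2 K) a b :
  hdual2 F a b = 2%:R^-1 * \sum_c \sum_d vol a b c d * s c * s d * F c d.
Proof.
congr (_ * _); apply: eq_bigr => c _; apply: eq_bigr => d _.
rewrite (sum_collapse (m:=c)); last first.
  move=> n hn; apply: big1 => p _; rewrite (gmE c n) ifN_eqC //; ring.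
rewrite (sum_collapse (m:=d)); first by rewrite /s.
by move=> n hn; rewrite (gmE d n) ifN_eqC //; ring.
Qed.

Definition atab (y01 y02 y03 y12 y13 y23 : C) : tensor2 K := fun a b =>
  match val a, val b with
  | 0, 1 => y01 | 1, 0 => - y01
  | 0, 2 => y02 | 2, 0 => - y02
  | 0, 3 => y03 | 3, 0 => - y03
  | 1, 2 => y12 | 2, 1 => - y12
  | 1, 3 => y13 | 3, 1 => - y13
  | 2, 3 => y23 | 3, 2 => - y23
  | _, _ => 0
  end.

Definition antisym (F : tensor2 K) := forall a b, F a b = - F b a.

Lemma antisym_diag (F : tensor2 K) a : antisym F -> F a a = 0.
Proof.
move=> H; have := H a a; move/eqP; rewrite -subr_eq0 opprK -mulr2n.
by rewrite mulrn_eq0 /= => /eqP.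
Qed.

Lemma atab_eq (F : tensor2 K) : antisym F ->
  F = atab (F i0 i1) (F i0 i2) (F i0 i3) (F i1 i2) (F i1 i3) (F i2 i3).
Proof.
move=> H; apply: functional_extensionality => a; apply: functional_extensionality => b.
by idxcase a; idxcase b; rewrite /atab /= ?antisym_diag // H.
Qed.

Lemma atab_antisym y01 y02 y03 y12 y13 y23 : antisym (atab y01 y02 y03 y12 y13 y23).
Proof. by move=> a b; idxcase a; idxcase b; rewrite /atab /= ?opprK ?oppr0. Qed.

Lemma hdual2_tab (F : tensor2 K) : antisym F ->
  hdual2 F = atab (F i2 i3) (- F i1 i3) (F i1 i2) (- F i0 i3) (F i0 i2) (- F i0 i1).
Proof.
move=> H; rewrite {1}(atab_eq H).
apply: functional_extensionality => a; apply: functional_extensionality => b.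
rewrite hdual2E !sum4.
idxcase a; idxcase b; rewrite /atab /s /Defs.gm !volE /vtab /=; by field.
Qed.


Definition mx (A : tensor2 K) : 'M[C]_4 := \matrix_(i, j) (s i * A i j).

Definition stab (r00 r01 r02 r03 r11 r12 r13 r22 r23 r33 : C) : tensor2 K := fun a b =>
  match val a, val b with
  | 0, 0 => r00 | 0, 1 => r01 | 0, 2 => r02 | 0, 3 => r03
  | 1, 0 => r01 | 1, 1 => r11 | 1, 2 => r12 | 1, 3 => r13
  | 2, 0 => r02 | 2, 1 => r12 | 2, 2 => r22 | 2, 3 => r23
  | 3, 0 => r03 | 3, 1 => r13 | 3, 2 => r23 | _, _ => r33
  end.

End Base.

Section Coord.
Variable K : rcfType.
Local Notation C := (K[i]).
Variables x01 x02 x03 x12 x13 x23 : C.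
Hypothesis HP : x01 * x23 - x02 * x13 + x03 * x12 = 0.
Hypothesis HE : x01 ^+ 2 + x02 ^+ 2 + x03 ^+ 2 - x12 ^+ 2 - x13 ^+ 2 - x23 ^+ 2 = 1.
Local Notation Mu := (mx (atab x01 x02 x03 x12 x13 x23)).
Local Notation Mus := (mx (atab x23 (- x13) x12 (- x03) x02 (- x01))).

Lemma cert (L R q r : C) :
  L - R = q * (x01 * x23 - x02 * x13 + x03 * x12)
        + r * (x01 ^+ 2 + x02 ^+ 2 + x03 ^+ 2 - x12 ^+ 2 - x13 ^+ 2 - x23 ^+ 2 - 1) -> L = R.
Proof. by rewrite HP HE subrr !mulr0 addr0 => /eqP; rewrite subr_eq0 => /eqP. Qed.

Lemma C3a : Mu *m Mus = 0.
Proof.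
apply/matrixP => i j; rewrite /mxtrace !(sum4, mxE);
idxcase i; idxcase j; rewrite /atab /stab /s /Defs.gm /=.
- by apply: (cert (q:=(1%:R)) (r:=0)); ring.
- by apply: (cert (q:=0) (r:=0)); ring.
- by apply: (cert (q:=0) (r:=0)); ring.
- by apply: (cert (q:=0) (r:=0)); ring.
- by apply: (cert (q:=0) (r:=0)); ring.
- by apply: (cert (q:=(1%:R)) (r:=0)); ring.
- by apply: (cert (q:=0) (r:=0)); ring.
- by apply: (cert (q:=0) (r:=0)); ring.
- by apply: (cert (q:=0) (r:=0)); ring.
- by apply: (cert (q:=0) (r:=0)); ring.
- by apply: (cert (q:=(1%:R)) (r:=0)); ring.
- by apply: (cert (q:=0) (r:=0)); ring.
- by apply: (cert (q:=0) (r:=0)); ring.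
- by apply: (cert (q:=0) (r:=0)); ring.
- by apply: (cert (q:=0) (r:=0)); ring.
- by apply: (cert (q:=(1%:R)) (r:=0)); ring.
Qed.

Lemma C3b : Mus *m Mu = 0.
Proof.
apply/matrixP => i j; rewrite /mxtrace !(sum4, mxE);
idxcase i; idxcase j; rewrite /atab /stab /s /Defs.gm /=.
- by apply: (cert (q:=(1%:R)) (r:=0)); ring.
- by apply: (cert (q:=0) (r:=0)); ring.
- by apply: (cert (q:=0) (r:=0)); ring.
- by apply: (cert (q:=0) (r:=0)); ring.
- by apply: (cert (q:=0) (r:=0)); ring.
- by apply: (cert (q:=(1%:R)) (r:=0)); ring.
- by apply: (cert (q:=0) (r:=0)); ring.
- by apply: (cert (q:=0) (r:=0)); ring.
- by apply: (cert (q:=0) (r:=0)); ring.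
- by apply: (cert (q:=0) (r:=0)); ring.
- by apply: (cert (q:=(1%:R)) (r:=0)); ring.
- by apply: (cert (q:=0) (r:=0)); ring.
- by apply: (cert (q:=0) (r:=0)); ring.
- by apply: (cert (q:=0) (r:=0)); ring.
- by apply: (cert (q:=0) (r:=0)); ring.
- by apply: (cert (q:=(1%:R)) (r:=0)); ring.
Qed.

Lemma C4 : Mu *m Mu - Mus *m Mus = 1%:M.
Proof.
apply/matrixP => i j; rewrite /mxtrace !(sum4, mxE);
idxcase i; idxcase j; rewrite /atab /stab /s /Defs.gm /=.
- by apply: (cert (q:=0) (r:=(1%:R))); ring.
- by apply: (cert (q:=0) (r:=0)); ring.
- by apply: (cert (q:=0) (r:=0)); ring.
- by apply: (cert (q:=0) (r:=0)); ring.
- by apply: (cert (q:=0) (r:=0)); ring.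
- by apply: (cert (q:=0) (r:=(1%:R))); ring.
- by apply: (cert (q:=0) (r:=0)); ring.
- by apply: (cert (q:=0) (r:=0)); ring.
- by apply: (cert (q:=0) (r:=0)); ring.
- by apply: (cert (q:=0) (r:=0)); ring.
- by apply: (cert (q:=0) (r:=(1%:R))); ring.
- by apply: (cert (q:=0) (r:=0)); ring.
- by apply: (cert (q:=0) (r:=0)); ring.
- by apply: (cert (q:=0) (r:=0)); ring.
- by apply: (cert (q:=0) (r:=0)); ring.
- by apply: (cert (q:=0) (r:=(1%:R))); ring.
Qed.

Lemma C5 (y01 y02 y03 y12 y13 y23 : C) : (2%:R : C) *: (Mu *m Mu *m mx (atab y01 y02 y03 y12 y13 y23) *m (Mu *m Mu)) = \tr (mx (atab y01 y02 y03 y12 y13 y23) *m Mu) *: Mu.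
Proof.
apply/matrixP => i j; rewrite /mxtrace !(sum4, mxE);
idxcase i; idxcase j; rewrite /atab /stab /s /Defs.gm /=.
- by apply: (cert (q:=0) (r:=0)); ring.
- by apply: (cert (q:=(2%:R * x01 * x02 * y13 - 2%:R * x01 * x03 * y12 - 2%:R * x01 * x12 * y03 + 2%:R * x01 * x13 * y02 - 2%:R * x01 * x23 * y01 - 2%:R * x01^+2 * y23 - 2%:R * x02 * x13 * y01 - 2%:R * x02 * x23 * y02 + 2%:R * x03 * x12 * y01 - 2%:R * x03 * x23 * y03 + 2%:R * x12 * x23 * y12 + 2%:R * x13 * x23 * y13 + 2%:R * x23^+2 * y23)) (r:=(- 2%:R * x01 * x02 * y02 - 2%:R * x01 * x03 * y03 + 2%:R * x01 * x12 * y12 + 2%:R * x01 * x13 * y13 + 2%:R * x01 * x23 * y23 - 2%:R * x01^+2 * y01))); ring.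
- by apply: (cert (q:=(- 2%:R * x01 * x02 * y23 + 2%:R * x01 * x13 * y01 + 2%:R * x01 * x23 * y02 - 2%:R * x02 * x03 * y12 - 2%:R * x02 * x12 * y03 + 2%:R * x02 * x13 * y02 - 2%:R * x02 * x23 * y01 + 2%:R * x02^+2 * y13 + 2%:R * x03 * x12 * y02 + 2%:R * x03 * x13 * y03 - 2%:R * x12 * x13 * y12 - 2%:R * x13 * x23 * y23 - 2%:R * x13^+2 * y13)) (r:=(- 2%:R * x01 * x02 * y01 - 2%:R * x02 * x03 * y03 + 2%:R * x02 * x12 * y12 + 2%:R * x02 * x13 * y13 + 2%:R * x02 * x23 * y23 - 2%:R * x02^+2 * y02))); ring.
- by apply: (cert (q:=(- 2%:R * x01 * x03 * y23 - 2%:R * x01 * x12 * y01 + 2%:R * x01 * x23 * y03 + 2%:R * x02 * x03 * y13 - 2%:R * x02 * x12 * y02 - 2%:R * x02 * x13 * y03 - 2%:R * x03 * x12 * y03 + 2%:R * x03 * x13 * y02 - 2%:R * x03 * x23 * y01 - 2%:R * x03^+2 * y12 + 2%:R * x12 * x13 * y13 + 2%:R * x12 * x23 * y23 + 2%:R * x12^+2 * y12)) (r:=(- 2%:R * x01 * x03 * y01 - 2%:R * x02 * x03 * y02 + 2%:R * x03 * x12 * y12 + 2%:R * x03 * x13 * y13 + 2%:R * x03 * x23 * y23 - 2%:R * x03^+2 * y03))); ring.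
- by apply: (cert (q:=(2%:R * x01 * x02 * y13 - 2%:R * x01 * x03 * y12 - 2%:R * x01 * x12 * y03 + 2%:R * x01 * x13 * y02 - 2%:R * x01 * x23 * y01 - 2%:R * x01^+2 * y23 - 2%:R * x02 * x13 * y01 - 2%:R * x02 * x23 * y02 + 2%:R * x03 * x12 * y01 - 2%:R * x03 * x23 * y03 + 2%:R * x12 * x23 * y12 + 2%:R * x13 * x23 * y13 + 2%:R * x23^+2 * y23)) (r:=(- 2%:R * x01 * x02 * y02 - 2%:R * x01 * x03 * y03 + 2%:R * x01 * x12 * y12 + 2%:R * x01 * x13 * y13 + 2%:R * x01 * x23 * y23 - 2%:R * x01^+2 * y01))); ring.
- by apply: (cert (q:=0) (r:=0)); ring.
- by apply: (cert (q:=(- 2%:R * x01 * x03 * y01 + 2%:R * x01 * x12 * y23 - 2%:R * x01 * x23 * y12 - 2%:R * x02 * x03 * y02 - 2%:R * x02 * x12 * y13 + 2%:R * x02 * x13 * y12 + 2%:R * x03 * x12 * y12 + 2%:R * x03 * x13 * y13 + 2%:R * x03 * x23 * y23 - 2%:R * x03^+2 * y03 - 2%:R * x12 * x13 * y02 + 2%:R * x12 * x23 * y01 + 2%:R * x12^+2 * y03)) (r:=(2%:R * x01 * x12 * y01 + 2%:R * x02 * x12 * y02 + 2%:R * x03 * x12 * y03 - 2%:R * x12 * x13 * y13 - 2%:R * x12 * x23 * y23 - 2%:R * x12^+2 * y12))); ring.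
- by apply: (cert (q:=(2%:R * x01 * x02 * y01 + 2%:R * x01 * x13 * y23 - 2%:R * x01 * x23 * y13 + 2%:R * x02 * x03 * y03 - 2%:R * x02 * x12 * y12 - 2%:R * x02 * x13 * y13 - 2%:R * x02 * x23 * y23 + 2%:R * x02^+2 * y02 - 2%:R * x03 * x12 * y13 + 2%:R * x03 * x13 * y12 + 2%:R * x12 * x13 * y03 + 2%:R * x13 * x23 * y01 - 2%:R * x13^+2 * y02)) (r:=(2%:R * x01 * x13 * y01 + 2%:R * x02 * x13 * y02 + 2%:R * x03 * x13 * y03 - 2%:R * x12 * x13 * y12 - 2%:R * x13 * x23 * y23 - 2%:R * x13^+2 * y13))); ring.
- by apply: (cert (q:=(- 2%:R * x01 * x02 * y23 + 2%:R * x01 * x13 * y01 + 2%:R * x01 * x23 * y02 - 2%:R * x02 * x03 * y12 - 2%:R * x02 * x12 * y03 + 2%:R * x02 * x13 * y02 - 2%:R * x02 * x23 * y01 + 2%:R * x02^+2 * y13 + 2%:R * x03 * x12 * y02 + 2%:R * x03 * x13 * y03 - 2%:R * x12 * x13 * y12 - 2%:R * x13 * x23 * y23 - 2%:R * x13^+2 * y13)) (r:=(- 2%:R * x01 * x02 * y01 - 2%:R * x02 * x03 * y03 + 2%:R * x02 * x12 * y12 + 2%:R * x02 * x13 * y13 + 2%:R * x02 * x23 * y23 - 2%:R * x02^+2 * y02))); ring.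
- by apply: (cert (q:=(2%:R * x01 * x03 * y01 - 2%:R * x01 * x12 * y23 + 2%:R * x01 * x23 * y12 + 2%:R * x02 * x03 * y02 + 2%:R * x02 * x12 * y13 - 2%:R * x02 * x13 * y12 - 2%:R * x03 * x12 * y12 - 2%:R * x03 * x13 * y13 - 2%:R * x03 * x23 * y23 + 2%:R * x03^+2 * y03 + 2%:R * x12 * x13 * y02 - 2%:R * x12 * x23 * y01 - 2%:R * x12^+2 * y03)) (r:=(- 2%:R * x01 * x12 * y01 - 2%:R * x02 * x12 * y02 - 2%:R * x03 * x12 * y03 + 2%:R * x12 * x13 * y13 + 2%:R * x12 * x23 * y23 + 2%:R * x12^+2 * y12))); ring.
- by apply: (cert (q:=0) (r:=0)); ring.
- by apply: (cert (q:=(- 2%:R * x01 * x02 * y02 - 2%:R * x01 * x03 * y03 + 2%:R * x01 * x12 * y12 + 2%:R * x01 * x13 * y13 + 2%:R * x01 * x23 * y23 - 2%:R * x01^+2 * y01 + 2%:R * x02 * x13 * y23 - 2%:R * x02 * x23 * y13 - 2%:R * x03 * x12 * y23 + 2%:R * x03 * x23 * y12 + 2%:R * x12 * x23 * y03 - 2%:R * x13 * x23 * y02 + 2%:R * x23^+2 * y01)) (r:=(2%:R * x01 * x23 * y01 + 2%:R * x02 * x23 * y02 + 2%:R * x03 * x23 * y03 - 2%:R * x12 * x23 * y12 - 2%:R * x13 * x23 * y13 - 2%:R * x23^+2 * y23))); ring.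
- by apply: (cert (q:=(- 2%:R * x01 * x03 * y23 - 2%:R * x01 * x12 * y01 + 2%:R * x01 * x23 * y03 + 2%:R * x02 * x03 * y13 - 2%:R * x02 * x12 * y02 - 2%:R * x02 * x13 * y03 - 2%:R * x03 * x12 * y03 + 2%:R * x03 * x13 * y02 - 2%:R * x03 * x23 * y01 - 2%:R * x03^+2 * y12 + 2%:R * x12 * x13 * y13 + 2%:R * x12 * x23 * y23 + 2%:R * x12^+2 * y12)) (r:=(- 2%:R * x01 * x03 * y01 - 2%:R * x02 * x03 * y02 + 2%:R * x03 * x12 * y12 + 2%:R * x03 * x13 * y13 + 2%:R * x03 * x23 * y23 - 2%:R * x03^+2 * y03))); ring.
- by apply: (cert (q:=(- 2%:R * x01 * x02 * y01 - 2%:R * x01 * x13 * y23 + 2%:R * x01 * x23 * y13 - 2%:R * x02 * x03 * y03 + 2%:R * x02 * x12 * y12 + 2%:R * x02 * x13 * y13 + 2%:R * x02 * x23 * y23 - 2%:R * x02^+2 * y02 + 2%:R * x03 * x12 * y13 - 2%:R * x03 * x13 * y12 - 2%:R * x12 * x13 * y03 - 2%:R * x13 * x23 * y01 + 2%:R * x13^+2 * y02)) (r:=(- 2%:R * x01 * x13 * y01 - 2%:R * x02 * x13 * y02 - 2%:R * x03 * x13 * y03 + 2%:R * x12 * x13 * y12 + 2%:R * x13 * x23 * y23 + 2%:R * x13^+2 * y13))); ring.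
- by apply: (cert (q:=(2%:R * x01 * x02 * y02 + 2%:R * x01 * x03 * y03 - 2%:R * x01 * x12 * y12 - 2%:R * x01 * x13 * y13 - 2%:R * x01 * x23 * y23 + 2%:R * x01^+2 * y01 - 2%:R * x02 * x13 * y23 + 2%:R * x02 * x23 * y13 + 2%:R * x03 * x12 * y23 - 2%:R * x03 * x23 * y12 - 2%:R * x12 * x23 * y03 + 2%:R * x13 * x23 * y02 - 2%:R * x23^+2 * y01)) (r:=(- 2%:R * x01 * x23 * y01 - 2%:R * x02 * x23 * y02 - 2%:R * x03 * x23 * y03 + 2%:R * x12 * x23 * y12 + 2%:R * x13 * x23 * y13 + 2%:R * x23^+2 * y23))); ring.
- by apply: (cert (q:=0) (r:=0)); ring.
Qed.

Lemma C6 (y01 y02 y03 y12 y13 y23 : C) : (2%:R : C) *: (Mus *m Mus *m mx (atab y01 y02 y03 y12 y13 y23) *m (Mus *m Mus)) = - \tr (mx (atab y01 y02 y03 y12 y13 y23) *m Mus) *: Mus.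
Proof.
apply/matrixP => i j; rewrite /mxtrace !(sum4, mxE);
idxcase i; idxcase j; rewrite /atab /stab /s /Defs.gm /=.
- by apply: (cert (q:=0) (r:=0)); ring.
- by apply: (cert (q:=(2%:R * x01 * x02 * y13 - 2%:R * x01 * x03 * y12 - 2%:R * x01 * x12 * y03 + 2%:R * x01 * x13 * y02 - 2%:R * x01 * x23 * y01 - 2%:R * x01^+2 * y23 - 2%:R * x02 * x13 * y01 - 2%:R * x02 * x23 * y02 + 2%:R * x03 * x12 * y01 - 2%:R * x03 * x23 * y03 + 2%:R * x12 * x23 * y12 + 2%:R * x13 * x23 * y13 + 2%:R * x23^+2 * y23)) (r:=(2%:R * x01 * x23 * y23 - 2%:R * x02 * x23 * y13 + 2%:R * x03 * x23 * y12 + 2%:R * x12 * x23 * y03 - 2%:R * x13 * x23 * y02 + 2%:R * x23^+2 * y01))); ring.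
- by apply: (cert (q:=(- 2%:R * x01 * x02 * y23 + 2%:R * x01 * x13 * y01 + 2%:R * x01 * x23 * y02 - 2%:R * x02 * x03 * y12 - 2%:R * x02 * x12 * y03 + 2%:R * x02 * x13 * y02 - 2%:R * x02 * x23 * y01 + 2%:R * x02^+2 * y13 + 2%:R * x03 * x12 * y02 + 2%:R * x03 * x13 * y03 - 2%:R * x12 * x13 * y12 - 2%:R * x13 * x23 * y23 - 2%:R * x13^+2 * y13)) (r:=(- 2%:R * x01 * x13 * y23 + 2%:R * x02 * x13 * y13 - 2%:R * x03 * x13 * y12 - 2%:R * x12 * x13 * y03 - 2%:R * x13 * x23 * y01 + 2%:R * x13^+2 * y02))); ring.
- by apply: (cert (q:=(- 2%:R * x01 * x03 * y23 - 2%:R * x01 * x12 * y01 + 2%:R * x01 * x23 * y03 + 2%:R * x02 * x03 * y13 - 2%:R * x02 * x12 * y02 - 2%:R * x02 * x13 * y03 - 2%:R * x03 * x12 * y03 + 2%:R * x03 * x13 * y02 - 2%:R * x03 * x23 * y01 - 2%:R * x03^+2 * y12 + 2%:R * x12 * x13 * y13 + 2%:R * x12 * x23 * y23 + 2%:R * x12^+2 * y12)) (r:=(2%:R * x01 * x12 * y23 - 2%:R * x02 * x12 * y13 + 2%:R * x03 * x12 * y12 - 2%:R * x12 * x13 * y02 + 2%:R * x12 * x23 * y01 + 2%:R * x12^+2 * y03))); ring.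
- by apply: (cert (q:=(2%:R * x01 * x02 * y13 - 2%:R * x01 * x03 * y12 - 2%:R * x01 * x12 * y03 + 2%:R * x01 * x13 * y02 - 2%:R * x01 * x23 * y01 - 2%:R * x01^+2 * y23 - 2%:R * x02 * x13 * y01 - 2%:R * x02 * x23 * y02 + 2%:R * x03 * x12 * y01 - 2%:R * x03 * x23 * y03 + 2%:R * x12 * x23 * y12 + 2%:R * x13 * x23 * y13 + 2%:R * x23^+2 * y23)) (r:=(2%:R * x01 * x23 * y23 - 2%:R * x02 * x23 * y13 + 2%:R * x03 * x23 * y12 + 2%:R * x12 * x23 * y03 - 2%:R * x13 * x23 * y02 + 2%:R * x23^+2 * y01))); ring.
- by apply: (cert (q:=0) (r:=0)); ring.
- by apply: (cert (q:=(- 2%:R * x01 * x03 * y01 + 2%:R * x01 * x12 * y23 - 2%:R * x01 * x23 * y12 - 2%:R * x02 * x03 * y02 - 2%:R * x02 * x12 * y13 + 2%:R * x02 * x13 * y12 + 2%:R * x03 * x12 * y12 + 2%:R * x03 * x13 * y13 + 2%:R * x03 * x23 * y23 - 2%:R * x03^+2 * y03 - 2%:R * x12 * x13 * y02 + 2%:R * x12 * x23 * y01 + 2%:R * x12^+2 * y03)) (r:=(2%:R * x01 * x03 * y23 - 2%:R * x02 * x03 * y13 + 2%:R * x03 * x12 * y03 - 2%:R * x03 * x13 * y02 + 2%:R * x03 * x23 * y01 + 2%:R * x03^+2 * y12))); ring.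
- by apply: (cert (q:=(2%:R * x01 * x02 * y01 + 2%:R * x01 * x13 * y23 - 2%:R * x01 * x23 * y13 + 2%:R * x02 * x03 * y03 - 2%:R * x02 * x12 * y12 - 2%:R * x02 * x13 * y13 - 2%:R * x02 * x23 * y23 + 2%:R * x02^+2 * y02 - 2%:R * x03 * x12 * y13 + 2%:R * x03 * x13 * y12 + 2%:R * x12 * x13 * y03 + 2%:R * x13 * x23 * y01 - 2%:R * x13^+2 * y02)) (r:=(- 2%:R * x01 * x02 * y23 - 2%:R * x02 * x03 * y12 - 2%:R * x02 * x12 * y03 + 2%:R * x02 * x13 * y02 - 2%:R * x02 * x23 * y01 + 2%:R * x02^+2 * y13))); ring.
- by apply: (cert (q:=(- 2%:R * x01 * x02 * y23 + 2%:R * x01 * x13 * y01 + 2%:R * x01 * x23 * y02 - 2%:R * x02 * x03 * y12 - 2%:R * x02 * x12 * y03 + 2%:R * x02 * x13 * y02 - 2%:R * x02 * x23 * y01 + 2%:R * x02^+2 * y13 + 2%:R * x03 * x12 * y02 + 2%:R * x03 * x13 * y03 - 2%:R * x12 * x13 * y12 - 2%:R * x13 * x23 * y23 - 2%:R * x13^+2 * y13)) (r:=(- 2%:R * x01 * x13 * y23 + 2%:R * x02 * x13 * y13 - 2%:R * x03 * x13 * y12 - 2%:R * x12 * x13 * y03 - 2%:R * x13 * x23 * y01 + 2%:R * x13^+2 * y02))); ring.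
- by apply: (cert (q:=(2%:R * x01 * x03 * y01 - 2%:R * x01 * x12 * y23 + 2%:R * x01 * x23 * y12 + 2%:R * x02 * x03 * y02 + 2%:R * x02 * x12 * y13 - 2%:R * x02 * x13 * y12 - 2%:R * x03 * x12 * y12 - 2%:R * x03 * x13 * y13 - 2%:R * x03 * x23 * y23 + 2%:R * x03^+2 * y03 + 2%:R * x12 * x13 * y02 - 2%:R * x12 * x23 * y01 - 2%:R * x12^+2 * y03)) (r:=(- 2%:R * x01 * x03 * y23 + 2%:R * x02 * x03 * y13 - 2%:R * x03 * x12 * y03 + 2%:R * x03 * x13 * y02 - 2%:R * x03 * x23 * y01 - 2%:R * x03^+2 * y12))); ring.
- by apply: (cert (q:=0) (r:=0)); ring.
- by apply: (cert (q:=(- 2%:R * x01 * x02 * y02 - 2%:R * x01 * x03 * y03 + 2%:R * x01 * x12 * y12 + 2%:R * x01 * x13 * y13 + 2%:R * x01 * x23 * y23 - 2%:R * x01^+2 * y01 + 2%:R * x02 * x13 * y23 - 2%:R * x02 * x23 * y13 - 2%:R * x03 * x12 * y23 + 2%:R * x03 * x23 * y12 + 2%:R * x12 * x23 * y03 - 2%:R * x13 * x23 * y02 + 2%:R * x23^+2 * y01)) (r:=(- 2%:R * x01 * x02 * y13 + 2%:R * x01 * x03 * y12 + 2%:R * x01 * x12 * y03 - 2%:R * x01 * x13 * y02 + 2%:R * x01 * x23 * y01 + 2%:R * x01^+2 * y23))); ring.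
- by apply: (cert (q:=(- 2%:R * x01 * x03 * y23 - 2%:R * x01 * x12 * y01 + 2%:R * x01 * x23 * y03 + 2%:R * x02 * x03 * y13 - 2%:R * x02 * x12 * y02 - 2%:R * x02 * x13 * y03 - 2%:R * x03 * x12 * y03 + 2%:R * x03 * x13 * y02 - 2%:R * x03 * x23 * y01 - 2%:R * x03^+2 * y12 + 2%:R * x12 * x13 * y13 + 2%:R * x12 * x23 * y23 + 2%:R * x12^+2 * y12)) (r:=(2%:R * x01 * x12 * y23 - 2%:R * x02 * x12 * y13 + 2%:R * x03 * x12 * y12 - 2%:R * x12 * x13 * y02 + 2%:R * x12 * x23 * y01 + 2%:R * x12^+2 * y03))); ring.
- by apply: (cert (q:=(- 2%:R * x01 * x02 * y01 - 2%:R * x01 * x13 * y23 + 2%:R * x01 * x23 * y13 - 2%:R * x02 * x03 * y03 + 2%:R * x02 * x12 * y12 + 2%:R * x02 * x13 * y13 + 2%:R * x02 * x23 * y23 - 2%:R * x02^+2 * y02 + 2%:R * x03 * x12 * y13 - 2%:R * x03 * x13 * y12 - 2%:R * x12 * x13 * y03 - 2%:R * x13 * x23 * y01 + 2%:R * x13^+2 * y02)) (r:=(2%:R * x01 * x02 * y23 + 2%:R * x02 * x03 * y12 + 2%:R * x02 * x12 * y03 - 2%:R * x02 * x13 * y02 + 2%:R * x02 * x23 * y01 - 2%:R * x02^+2 * y13))); ring.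
- by apply: (cert (q:=(2%:R * x01 * x02 * y02 + 2%:R * x01 * x03 * y03 - 2%:R * x01 * x12 * y12 - 2%:R * x01 * x13 * y13 - 2%:R * x01 * x23 * y23 + 2%:R * x01^+2 * y01 - 2%:R * x02 * x13 * y23 + 2%:R * x02 * x23 * y13 + 2%:R * x03 * x12 * y23 - 2%:R * x03 * x23 * y12 - 2%:R * x12 * x23 * y03 + 2%:R * x13 * x23 * y02 - 2%:R * x23^+2 * y01)) (r:=(2%:R * x01 * x02 * y13 - 2%:R * x01 * x03 * y12 - 2%:R * x01 * x12 * y03 + 2%:R * x01 * x13 * y02 - 2%:R * x01 * x23 * y01 - 2%:R * x01^+2 * y23))); ring.
- by apply: (cert (q:=0) (r:=0)); ring.
Qed.

Lemma F3 (r00 r01 r02 r03 r11 r12 r13 r22 r23 r33 : C) : Mu *m Mu *m mx (stab r00 r01 r02 r03 r11 r12 r13 r22 r23 r33) *m (Mu *m Mu) + Mu *m mx (stab r00 r01 r02 r03 r11 r12 r13 r22 r23 r33) *m Mu = \tr (Mu *m Mu *m mx (stab r00 r01 r02 r03 r11 r12 r13 r22 r23 r33)) *: (Mu *m Mu).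
Proof.
apply/matrixP => i j; rewrite /mxtrace !(sum4, mxE);
idxcase i; idxcase j; rewrite /atab /stab /s /Defs.gm /=.
- by apply: (cert (q:=(- r11 * x01 * x23 - r11 * x02 * x13 + r11 * x03 * x12 + 2%:R * r12 * x01 * x13 - 2%:R * r12 * x02 * x23 - 2%:R * r13 * x01 * x12 - 2%:R * r13 * x03 * x23 + r22 * x01 * x23 + r22 * x02 * x13 + r22 * x03 * x12 - 2%:R * r23 * x02 * x12 + 2%:R * r23 * x03 * x13 + r33 * x01 * x23 - r33 * x02 * x13 - r33 * x03 * x12)) (r:=(- r11 * x01^+2 - 2%:R * r12 * x01 * x02 - 2%:R * r13 * x01 * x03 - r22 * x02^+2 - 2%:R * r23 * x02 * x03 - r33 * x03^+2))); ring.
- by apply: (cert (q:=(- r01 * x01 * x23 - r01 * x02 * x13 + r01 * x03 * x12 + r02 * x01 * x13 - r02 * x02 * x23 - r03 * x01 * x12 - r03 * x03 * x23 + r12 * x01 * x03 - r12 * x12 * x23 - r13 * x01 * x02 - r13 * x13 * x23 + r22 * x02 * x03 + r22 * x12 * x13 - r23 * x02^+2 + r23 * x03^+2 - r23 * x12^+2 + r23 * x13^+2 - r33 * x02 * x03 - r33 * x12 * x13)) (r:=(- r01 * x01^+2 - r02 * x01 * x02 - r03 * x01 * x03 - r12 * x01 * x12 - r13 * x01 * x13 - r22 * x02 * x12 - r23 * x02 * x13 - r23 * x03 * x12 - r33 * x03 * x13))); ring.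
- by apply: (cert (q:=(r01 * x01 * x13 - r01 * x02 * x23 + r02 * x01 * x23 + r02 * x02 * x13 + r02 * x03 * x12 - r03 * x02 * x12 + r03 * x03 * x13 - r11 * x01 * x03 + r11 * x12 * x23 - r12 * x02 * x03 - r12 * x12 * x13 + r13 * x01^+2 - r13 * x03^+2 + r13 * x12^+2 - r13 * x23^+2 + r23 * x01 * x02 + r23 * x13 * x23 + r33 * x01 * x03 - r33 * x12 * x23)) (r:=(- r01 * x01 * x02 - r02 * x02^+2 - r03 * x02 * x03 + r11 * x01 * x12 + r12 * x02 * x12 - r13 * x01 * x23 + r13 * x03 * x12 - r23 * x02 * x23 - r33 * x03 * x23))); ring.
- by apply: (cert (q:=(- r01 * x01 * x12 - r01 * x03 * x23 - r02 * x02 * x12 + r02 * x03 * x13 + r03 * x01 * x23 - r03 * x02 * x13 - r03 * x03 * x12 + r11 * x01 * x02 + r11 * x13 * x23 - r12 * x01^+2 + r12 * x02^+2 - r12 * x13^+2 + r12 * x23^+2 + r13 * x02 * x03 + r13 * x12 * x13 - r22 * x01 * x02 - r22 * x13 * x23 - r23 * x01 * x03 + r23 * x12 * x23)) (r:=(- r01 * x01 * x03 - r02 * x02 * x03 - r03 * x03^+2 + r11 * x01 * x13 + r12 * x01 * x23 + r12 * x02 * x13 + r13 * x03 * x13 + r22 * x02 * x23 + r23 * x03 * x23))); ring.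
- by apply: (cert (q:=(r01 * x01 * x23 + r01 * x02 * x13 - r01 * x03 * x12 - r02 * x01 * x13 + r02 * x02 * x23 + r03 * x01 * x12 + r03 * x03 * x23 - r12 * x01 * x03 + r12 * x12 * x23 + r13 * x01 * x02 + r13 * x13 * x23 - r22 * x02 * x03 - r22 * x12 * x13 + r23 * x02^+2 - r23 * x03^+2 + r23 * x12^+2 - r23 * x13^+2 + r33 * x02 * x03 + r33 * x12 * x13)) (r:=(r01 * x01^+2 + r02 * x01 * x02 + r03 * x01 * x03 + r12 * x01 * x12 + r13 * x01 * x13 + r22 * x02 * x12 + r23 * x02 * x13 + r23 * x03 * x12 + r33 * x03 * x13))); ring.
- by apply: (cert (q:=(r00 * x01 * x23 + r00 * x02 * x13 - r00 * x03 * x12 - 2%:R * r02 * x01 * x03 + 2%:R * r02 * x12 * x23 + 2%:R * r03 * x01 * x02 + 2%:R * r03 * x13 * x23 + r22 * x01 * x23 - r22 * x02 * x13 - r22 * x03 * x12 + 2%:R * r23 * x02 * x12 - 2%:R * r23 * x03 * x13 + r33 * x01 * x23 + r33 * x02 * x13 + r33 * x03 * x12)) (r:=(r00 * x01^+2 + 2%:R * r02 * x01 * x12 + 2%:R * r03 * x01 * x13 + r22 * x12^+2 + 2%:R * r23 * x12 * x13 + r33 * x13^+2))); ring.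
- by apply: (cert (q:=(- r00 * x01 * x13 + r00 * x02 * x23 + r01 * x01 * x03 - r01 * x12 * x23 - r02 * x02 * x03 - r02 * x12 * x13 - r03 * x01^+2 + r03 * x02^+2 - r03 * x13^+2 + r03 * x23^+2 - r12 * x01 * x23 + r12 * x02 * x13 + r12 * x03 * x12 - r13 * x02 * x12 + r13 * x03 * x13 - r23 * x01 * x12 - r23 * x03 * x23 - r33 * x01 * x13 + r33 * x02 * x23)) (r:=(r00 * x01 * x02 - r01 * x01 * x12 + r02 * x02 * x12 + r03 * x01 * x23 + r03 * x02 * x13 - r12 * x12^+2 - r13 * x12 * x13 + r23 * x12 * x23 + r33 * x13 * x23))); ring.
- by apply: (cert (q:=(r00 * x01 * x12 + r00 * x03 * x23 - r01 * x01 * x02 - r01 * x13 * x23 + r02 * x01^+2 - r02 * x03^+2 + r02 * x12^+2 - r02 * x23^+2 + r03 * x02 * x03 + r03 * x12 * x13 - r12 * x02 * x12 + r12 * x03 * x13 - r13 * x01 * x23 - r13 * x02 * x13 - r13 * x03 * x12 + r22 * x01 * x12 + r22 * x03 * x23 + r23 * x01 * x13 - r23 * x02 * x23)) (r:=(r00 * x01 * x03 - r01 * x01 * x13 - r02 * x01 * x23 + r02 * x03 * x12 + r03 * x03 * x13 - r12 * x12 * x13 - r13 * x13^+2 - r22 * x12 * x23 - r23 * x13 * x23))); ring.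
- by apply: (cert (q:=(- r01 * x01 * x13 + r01 * x02 * x23 - r02 * x01 * x23 - r02 * x02 * x13 - r02 * x03 * x12 + r03 * x02 * x12 - r03 * x03 * x13 + r11 * x01 * x03 - r11 * x12 * x23 + r12 * x02 * x03 + r12 * x12 * x13 - r13 * x01^+2 + r13 * x03^+2 - r13 * x12^+2 + r13 * x23^+2 - r23 * x01 * x02 - r23 * x13 * x23 - r33 * x01 * x03 + r33 * x12 * x23)) (r:=(r01 * x01 * x02 + r02 * x02^+2 + r03 * x02 * x03 - r11 * x01 * x12 - r12 * x02 * x12 + r13 * x01 * x23 - r13 * x03 * x12 + r23 * x02 * x23 + r33 * x03 * x23))); ring.
- by apply: (cert (q:=(- r00 * x01 * x13 + r00 * x02 * x23 + r01 * x01 * x03 - r01 * x12 * x23 - r02 * x02 * x03 - r02 * x12 * x13 - r03 * x01^+2 + r03 * x02^+2 - r03 * x13^+2 + r03 * x23^+2 - r12 * x01 * x23 + r12 * x02 * x13 + r12 * x03 * x12 - r13 * x02 * x12 + r13 * x03 * x13 - r23 * x01 * x12 - r23 * x03 * x23 - r33 * x01 * x13 + r33 * x02 * x23)) (r:=(r00 * x01 * x02 - r01 * x01 * x12 + r02 * x02 * x12 + r03 * x01 * x23 + r03 * x02 * x13 - r12 * x12^+2 - r13 * x12 * x13 + r23 * x12 * x23 + r33 * x13 * x23))); ring.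
- by apply: (cert (q:=(- r00 * x01 * x23 - r00 * x02 * x13 - r00 * x03 * x12 + 2%:R * r01 * x02 * x03 + 2%:R * r01 * x12 * x13 - 2%:R * r03 * x01 * x02 - 2%:R * r03 * x13 * x23 + r11 * x01 * x23 - r11 * x02 * x13 - r11 * x03 * x12 + 2%:R * r13 * x01 * x12 + 2%:R * r13 * x03 * x23 - r33 * x01 * x23 - r33 * x02 * x13 + r33 * x03 * x12)) (r:=(r00 * x02^+2 - 2%:R * r01 * x02 * x12 + 2%:R * r03 * x02 * x23 + r11 * x12^+2 - 2%:R * r13 * x12 * x23 + r33 * x23^+2))); ring.
- by apply: (cert (q:=(r00 * x02 * x12 - r00 * x03 * x13 - r01 * x02^+2 + r01 * x03^+2 - r01 * x12^+2 + r01 * x13^+2 + r02 * x01 * x02 + r02 * x13 * x23 - r03 * x01 * x03 + r03 * x12 * x23 + r11 * x02 * x12 - r11 * x03 * x13 - r12 * x01 * x12 - r12 * x03 * x23 + r13 * x01 * x13 - r13 * x02 * x23 + r23 * x01 * x23 + r23 * x02 * x13 - r23 * x03 * x12)) (r:=(r00 * x02 * x03 - r01 * x02 * x13 - r01 * x03 * x12 - r02 * x02 * x23 + r03 * x03 * x23 + r11 * x12 * x13 + r12 * x12 * x23 - r13 * x13 * x23 - r23 * x23^+2))); ring.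
- by apply: (cert (q:=(r01 * x01 * x12 + r01 * x03 * x23 + r02 * x02 * x12 - r02 * x03 * x13 - r03 * x01 * x23 + r03 * x02 * x13 + r03 * x03 * x12 - r11 * x01 * x02 - r11 * x13 * x23 + r12 * x01^+2 - r12 * x02^+2 + r12 * x13^+2 - r12 * x23^+2 - r13 * x02 * x03 - r13 * x12 * x13 + r22 * x01 * x02 + r22 * x13 * x23 + r23 * x01 * x03 - r23 * x12 * x23)) (r:=(r01 * x01 * x03 + r02 * x02 * x03 + r03 * x03^+2 - r11 * x01 * x13 - r12 * x01 * x23 - r12 * x02 * x13 - r13 * x03 * x13 - r22 * x02 * x23 - r23 * x03 * x23))); ring.
- by apply: (cert (q:=(r00 * x01 * x12 + r00 * x03 * x23 - r01 * x01 * x02 - r01 * x13 * x23 + r02 * x01^+2 - r02 * x03^+2 + r02 * x12^+2 - r02 * x23^+2 + r03 * x02 * x03 + r03 * x12 * x13 - r12 * x02 * x12 + r12 * x03 * x13 - r13 * x01 * x23 - r13 * x02 * x13 - r13 * x03 * x12 + r22 * x01 * x12 + r22 * x03 * x23 + r23 * x01 * x13 - r23 * x02 * x23)) (r:=(r00 * x01 * x03 - r01 * x01 * x13 - r02 * x01 * x23 + r02 * x03 * x12 + r03 * x03 * x13 - r12 * x12 * x13 - r13 * x13^+2 - r22 * x12 * x23 - r23 * x13 * x23))); ring.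
- by apply: (cert (q:=(r00 * x02 * x12 - r00 * x03 * x13 - r01 * x02^+2 + r01 * x03^+2 - r01 * x12^+2 + r01 * x13^+2 + r02 * x01 * x02 + r02 * x13 * x23 - r03 * x01 * x03 + r03 * x12 * x23 + r11 * x02 * x12 - r11 * x03 * x13 - r12 * x01 * x12 - r12 * x03 * x23 + r13 * x01 * x13 - r13 * x02 * x23 + r23 * x01 * x23 + r23 * x02 * x13 - r23 * x03 * x12)) (r:=(r00 * x02 * x03 - r01 * x02 * x13 - r01 * x03 * x12 - r02 * x02 * x23 + r03 * x03 * x23 + r11 * x12 * x13 + r12 * x12 * x23 - r13 * x13 * x23 - r23 * x23^+2))); ring.
- by apply: (cert (q:=(- r00 * x01 * x23 + r00 * x02 * x13 + r00 * x03 * x12 - 2%:R * r01 * x02 * x03 - 2%:R * r01 * x12 * x13 + 2%:R * r02 * x01 * x03 - 2%:R * r02 * x12 * x23 + r11 * x01 * x23 + r11 * x02 * x13 + r11 * x03 * x12 - 2%:R * r12 * x01 * x13 + 2%:R * r12 * x02 * x23 - r22 * x01 * x23 - r22 * x02 * x13 + r22 * x03 * x12)) (r:=(r00 * x03^+2 - 2%:R * r01 * x03 * x13 - 2%:R * r02 * x03 * x23 + r11 * x13^+2 + 2%:R * r12 * x13 * x23 + r22 * x23^+2))); ring.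
Qed.

Lemma F4 (r00 r01 r02 r03 r11 r12 r13 r22 r23 r33 : C) : Mus *m Mus *m mx (stab r00 r01 r02 r03 r11 r12 r13 r22 r23 r33) *m (Mus *m Mus) - Mus *m mx (stab r00 r01 r02 r03 r11 r12 r13 r22 r23 r33) *m Mus = \tr (Mus *m Mus *m mx (stab r00 r01 r02 r03 r11 r12 r13 r22 r23 r33)) *: (Mus *m Mus).
Proof.
apply/matrixP => i j; rewrite /mxtrace !(sum4, mxE);
idxcase i; idxcase j; rewrite /atab /stab /s /Defs.gm /=.
- by apply: (cert (q:=(- r11 * x01 * x23 - r11 * x02 * x13 + r11 * x03 * x12 + 2%:R * r12 * x01 * x13 - 2%:R * r12 * x02 * x23 - 2%:R * r13 * x01 * x12 - 2%:R * r13 * x03 * x23 + r22 * x01 * x23 + r22 * x02 * x13 + r22 * x03 * x12 - 2%:R * r23 * x02 * x12 + 2%:R * r23 * x03 * x13 + r33 * x01 * x23 - r33 * x02 * x13 - r33 * x03 * x12)) (r:=(r11 * x23^+2 - 2%:R * r12 * x13 * x23 + 2%:R * r13 * x12 * x23 + r22 * x13^+2 - 2%:R * r23 * x12 * x13 + r33 * x12^+2))); ring.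
- by apply: (cert (q:=(- r01 * x01 * x23 - r01 * x02 * x13 + r01 * x03 * x12 + r02 * x01 * x13 - r02 * x02 * x23 - r03 * x01 * x12 - r03 * x03 * x23 + r12 * x01 * x03 - r12 * x12 * x23 - r13 * x01 * x02 - r13 * x13 * x23 + r22 * x02 * x03 + r22 * x12 * x13 - r23 * x02^+2 + r23 * x03^+2 - r23 * x12^+2 + r23 * x13^+2 - r33 * x02 * x03 - r33 * x12 * x13)) (r:=(r01 * x23^+2 - r02 * x13 * x23 + r03 * x12 * x23 - r12 * x03 * x23 + r13 * x02 * x23 + r22 * x03 * x13 - r23 * x02 * x13 - r23 * x03 * x12 + r33 * x02 * x12))); ring.
- by apply: (cert (q:=(r01 * x01 * x13 - r01 * x02 * x23 + r02 * x01 * x23 + r02 * x02 * x13 + r02 * x03 * x12 - r03 * x02 * x12 + r03 * x03 * x13 - r11 * x01 * x03 + r11 * x12 * x23 - r12 * x02 * x03 - r12 * x12 * x13 + r13 * x01^+2 - r13 * x03^+2 + r13 * x12^+2 - r13 * x23^+2 + r23 * x01 * x02 + r23 * x13 * x23 + r33 * x01 * x03 - r33 * x12 * x23)) (r:=(- r01 * x13 * x23 + r02 * x13^+2 - r03 * x12 * x13 + r11 * x03 * x23 - r12 * x03 * x13 - r13 * x01 * x23 + r13 * x03 * x12 + r23 * x01 * x13 - r33 * x01 * x12))); ring.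
- by apply: (cert (q:=(- r01 * x01 * x12 - r01 * x03 * x23 - r02 * x02 * x12 + r02 * x03 * x13 + r03 * x01 * x23 - r03 * x02 * x13 - r03 * x03 * x12 + r11 * x01 * x02 + r11 * x13 * x23 - r12 * x01^+2 + r12 * x02^+2 - r12 * x13^+2 + r12 * x23^+2 + r13 * x02 * x03 + r13 * x12 * x13 - r22 * x01 * x02 - r22 * x13 * x23 - r23 * x01 * x03 + r23 * x12 * x23)) (r:=(r01 * x12 * x23 - r02 * x12 * x13 + r03 * x12^+2 - r11 * x02 * x23 + r12 * x01 * x23 + r12 * x02 * x13 - r13 * x02 * x12 - r22 * x01 * x13 + r23 * x01 * x12))); ring.
- by apply: (cert (q:=(r01 * x01 * x23 + r01 * x02 * x13 - r01 * x03 * x12 - r02 * x01 * x13 + r02 * x02 * x23 + r03 * x01 * x12 + r03 * x03 * x23 - r12 * x01 * x03 + r12 * x12 * x23 + r13 * x01 * x02 + r13 * x13 * x23 - r22 * x02 * x03 - r22 * x12 * x13 + r23 * x02^+2 - r23 * x03^+2 + r23 * x12^+2 - r23 * x13^+2 + r33 * x02 * x03 + r33 * x12 * x13)) (r:=(- r01 * x23^+2 + r02 * x13 * x23 - r03 * x12 * x23 + r12 * x03 * x23 - r13 * x02 * x23 - r22 * x03 * x13 + r23 * x02 * x13 + r23 * x03 * x12 - r33 * x02 * x12))); ring.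
- by apply: (cert (q:=(r00 * x01 * x23 + r00 * x02 * x13 - r00 * x03 * x12 - 2%:R * r02 * x01 * x03 + 2%:R * r02 * x12 * x23 + 2%:R * r03 * x01 * x02 + 2%:R * r03 * x13 * x23 + r22 * x01 * x23 - r22 * x02 * x13 - r22 * x03 * x12 + 2%:R * r23 * x02 * x12 - 2%:R * r23 * x03 * x13 + r33 * x01 * x23 + r33 * x02 * x13 + r33 * x03 * x12)) (r:=(- r00 * x23^+2 + 2%:R * r02 * x03 * x23 - 2%:R * r03 * x02 * x23 - r22 * x03^+2 + 2%:R * r23 * x02 * x03 - r33 * x02^+2))); ring.
- by apply: (cert (q:=(- r00 * x01 * x13 + r00 * x02 * x23 + r01 * x01 * x03 - r01 * x12 * x23 - r02 * x02 * x03 - r02 * x12 * x13 - r03 * x01^+2 + r03 * x02^+2 - r03 * x13^+2 + r03 * x23^+2 - r12 * x01 * x23 + r12 * x02 * x13 + r12 * x03 * x12 - r13 * x02 * x12 + r13 * x03 * x13 - r23 * x01 * x12 - r23 * x03 * x23 - r33 * x01 * x13 + r33 * x02 * x23)) (r:=(r00 * x13 * x23 - r01 * x03 * x23 - r02 * x03 * x13 + r03 * x01 * x23 + r03 * x02 * x13 + r12 * x03^+2 - r13 * x02 * x03 - r23 * x01 * x03 + r33 * x01 * x02))); ring.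
- by apply: (cert (q:=(r00 * x01 * x12 + r00 * x03 * x23 - r01 * x01 * x02 - r01 * x13 * x23 + r02 * x01^+2 - r02 * x03^+2 + r02 * x12^+2 - r02 * x23^+2 + r03 * x02 * x03 + r03 * x12 * x13 - r12 * x02 * x12 + r12 * x03 * x13 - r13 * x01 * x23 - r13 * x02 * x13 - r13 * x03 * x12 + r22 * x01 * x12 + r22 * x03 * x23 + r23 * x01 * x13 - r23 * x02 * x23)) (r:=(- r00 * x12 * x23 + r01 * x02 * x23 - r02 * x01 * x23 + r02 * x03 * x12 - r03 * x02 * x12 - r12 * x02 * x03 + r13 * x02^+2 + r22 * x01 * x03 - r23 * x01 * x02))); ring.
- by apply: (cert (q:=(- r01 * x01 * x13 + r01 * x02 * x23 - r02 * x01 * x23 - r02 * x02 * x13 - r02 * x03 * x12 + r03 * x02 * x12 - r03 * x03 * x13 + r11 * x01 * x03 - r11 * x12 * x23 + r12 * x02 * x03 + r12 * x12 * x13 - r13 * x01^+2 + r13 * x03^+2 - r13 * x12^+2 + r13 * x23^+2 - r23 * x01 * x02 - r23 * x13 * x23 - r33 * x01 * x03 + r33 * x12 * x23)) (r:=(r01 * x13 * x23 - r02 * x13^+2 + r03 * x12 * x13 - r11 * x03 * x23 + r12 * x03 * x13 + r13 * x01 * x23 - r13 * x03 * x12 - r23 * x01 * x13 + r33 * x01 * x12))); ring.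
- by apply: (cert (q:=(- r00 * x01 * x13 + r00 * x02 * x23 + r01 * x01 * x03 - r01 * x12 * x23 - r02 * x02 * x03 - r02 * x12 * x13 - r03 * x01^+2 + r03 * x02^+2 - r03 * x13^+2 + r03 * x23^+2 - r12 * x01 * x23 + r12 * x02 * x13 + r12 * x03 * x12 - r13 * x02 * x12 + r13 * x03 * x13 - r23 * x01 * x12 - r23 * x03 * x23 - r33 * x01 * x13 + r33 * x02 * x23)) (r:=(r00 * x13 * x23 - r01 * x03 * x23 - r02 * x03 * x13 + r03 * x01 * x23 + r03 * x02 * x13 + r12 * x03^+2 - r13 * x02 * x03 - r23 * x01 * x03 + r33 * x01 * x02))); ring.
- by apply: (cert (q:=(- r00 * x01 * x23 - r00 * x02 * x13 - r00 * x03 * x12 + 2%:R * r01 * x02 * x03 + 2%:R * r01 * x12 * x13 - 2%:R * r03 * x01 * x02 - 2%:R * r03 * x13 * x23 + r11 * x01 * x23 - r11 * x02 * x13 - r11 * x03 * x12 + 2%:R * r13 * x01 * x12 + 2%:R * r13 * x03 * x23 - r33 * x01 * x23 - r33 * x02 * x13 + r33 * x03 * x12)) (r:=(- r00 * x13^+2 + 2%:R * r01 * x03 * x13 - 2%:R * r03 * x01 * x13 - r11 * x03^+2 + 2%:R * r13 * x01 * x03 - r33 * x01^+2))); ring.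
- by apply: (cert (q:=(r00 * x02 * x12 - r00 * x03 * x13 - r01 * x02^+2 + r01 * x03^+2 - r01 * x12^+2 + r01 * x13^+2 + r02 * x01 * x02 + r02 * x13 * x23 - r03 * x01 * x03 + r03 * x12 * x23 + r11 * x02 * x12 - r11 * x03 * x13 - r12 * x01 * x12 - r12 * x03 * x23 + r13 * x01 * x13 - r13 * x02 * x23 + r23 * x01 * x23 + r23 * x02 * x13 - r23 * x03 * x12)) (r:=(r00 * x12 * x13 - r01 * x02 * x13 - r01 * x03 * x12 + r02 * x01 * x13 + r03 * x01 * x12 + r11 * x02 * x03 - r12 * x01 * x03 - r13 * x01 * x02 + r23 * x01^+2))); ring.
- by apply: (cert (q:=(r01 * x01 * x12 + r01 * x03 * x23 + r02 * x02 * x12 - r02 * x03 * x13 - r03 * x01 * x23 + r03 * x02 * x13 + r03 * x03 * x12 - r11 * x01 * x02 - r11 * x13 * x23 + r12 * x01^+2 - r12 * x02^+2 + r12 * x13^+2 - r12 * x23^+2 - r13 * x02 * x03 - r13 * x12 * x13 + r22 * x01 * x02 + r22 * x13 * x23 + r23 * x01 * x03 - r23 * x12 * x23)) (r:=(- r01 * x12 * x23 + r02 * x12 * x13 - r03 * x12^+2 + r11 * x02 * x23 - r12 * x01 * x23 - r12 * x02 * x13 + r13 * x02 * x12 + r22 * x01 * x13 - r23 * x01 * x12))); ring.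
- by apply: (cert (q:=(r00 * x01 * x12 + r00 * x03 * x23 - r01 * x01 * x02 - r01 * x13 * x23 + r02 * x01^+2 - r02 * x03^+2 + r02 * x12^+2 - r02 * x23^+2 + r03 * x02 * x03 + r03 * x12 * x13 - r12 * x02 * x12 + r12 * x03 * x13 - r13 * x01 * x23 - r13 * x02 * x13 - r13 * x03 * x12 + r22 * x01 * x12 + r22 * x03 * x23 + r23 * x01 * x13 - r23 * x02 * x23)) (r:=(- r00 * x12 * x23 + r01 * x02 * x23 - r02 * x01 * x23 + r02 * x03 * x12 - r03 * x02 * x12 - r12 * x02 * x03 + r13 * x02^+2 + r22 * x01 * x03 - r23 * x01 * x02))); ring.
- by apply: (cert (q:=(r00 * x02 * x12 - r00 * x03 * x13 - r01 * x02^+2 + r01 * x03^+2 - r01 * x12^+2 + r01 * x13^+2 + r02 * x01 * x02 + r02 * x13 * x23 - r03 * x01 * x03 + r03 * x12 * x23 + r11 * x02 * x12 - r11 * x03 * x13 - r12 * x01 * x12 - r12 * x03 * x23 + r13 * x01 * x13 - r13 * x02 * x23 + r23 * x01 * x23 + r23 * x02 * x13 - r23 * x03 * x12)) (r:=(r00 * x12 * x13 - r01 * x02 * x13 - r01 * x03 * x12 + r02 * x01 * x13 + r03 * x01 * x12 + r11 * x02 * x03 - r12 * x01 * x03 - r13 * x01 * x02 + r23 * x01^+2))); ring.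
- by apply: (cert (q:=(- r00 * x01 * x23 + r00 * x02 * x13 + r00 * x03 * x12 - 2%:R * r01 * x02 * x03 - 2%:R * r01 * x12 * x13 + 2%:R * r02 * x01 * x03 - 2%:R * r02 * x12 * x23 + r11 * x01 * x23 + r11 * x02 * x13 + r11 * x03 * x12 - 2%:R * r12 * x01 * x13 + 2%:R * r12 * x02 * x23 - r22 * x01 * x23 - r22 * x02 * x13 + r22 * x03 * x12)) (r:=(- r00 * x12^+2 + 2%:R * r01 * x02 * x12 - 2%:R * r02 * x01 * x12 - r11 * x02^+2 + 2%:R * r12 * x01 * x02 - r22 * x01^+2))); ring.
Qed.

Lemma C7 : \tr (Mu *m Mu) = 2%:R.
Proof.
rewrite /mxtrace !(sum4, mxE) /atab /s /Defs.gm /=.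
by apply: (cert (q:=0) (r:=2%:R)); ring.
Qed.

End Coord.

Section S1.
Variable K : rcfType.
Local Notation C := (K[i]).
Local Notation gm := (@gm K).
Local Notation mx := (@mx K).

Lemma fext2 (A B : tensor2 K) : (forall a b, A a b = B a b) -> A = B.
Proof. by move=> H; do 2 (apply: functional_extensionality => ?); apply: H. Qed.

Lemma s_neq0 a : s K a != 0.
Proof. by apply/eqP => h; have := s_sq K a; rewrite h mul0r => /eqP; rewrite eq_sym oner_eq0. Qed.

Lemma mx_inj (A B : tensor2 K) : mx A = mx B -> A = B.
Proof.
move=> /matrixP H; apply: fext2 => a b; have := H a b; rewrite !mxE.
by move/(mulfI (s_neq0 a)).
Qed.

Lemma mx_dot2 (A B : tensor2 K) : mx (dot2 A B) = mx A *m mx B.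
Proof.
apply/matrixP => i j; rewrite !mxE dot2E mulr_sumr; apply: eq_bigr => m _.
by rewrite !mxE; ring.
Qed.

Lemma mx_gm : mx gm = 1%:M.
Proof.
apply/matrixP => i j; rewrite !mxE gmE; case: eqP => [->|]; first by rewrite s_sq.
by rewrite mulr0.
Qed.

Lemma mx_lin (al be : C) (A B : tensor2 K) :
  mx (fun a b => al * A a b + be * B a b) = al *: mx A + be *: mx B.
Proof. by apply/matrixP => i j; rewrite !mxE; ring. Qed.

Lemma mx_scale (al : C) (A : tensor2 K) : mx (fun a b => al * A a b) = al *: mx A.
Proof. by apply/matrixP => i j; rewrite !mxE; ring. Qed.

Lemma mx0 : mx (fun _ _ => 0) = 0.
Proof. by apply/matrixP => i j; rewrite !mxE mulr0. Qed.

Lemma tr2_mx (A : tensor2 K) : tr2 A = \tr (mx A).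
Proof.
rewrite /tr2 /mxtrace; apply: eq_bigr => a _; rewrite mxE.
rewrite (sum_collapse (m:=a)); first by rewrite gmE eqxx.
by move=> n hn; rewrite gmE ifN_eqC // mul0r.
Qed.

End S1.

Section ProjAlg.
Variable K : rcfType.
Local Notation C := (K[i]).
Variables Mu Mus : 'M[C]_4.
Hypothesis H3a : Mu *m Mus = 0.
Hypothesis H3b : Mus *m Mu = 0.
Hypothesis H4 : Mu *m Mu - Mus *m Mus = 1%:M.
Local Notation Mv := (Mu *m Mu).
Local Notation Mh := (- (Mus *m Mus)).

Lemma vh1 : Mv + Mh = 1%:M. Proof using H3a H3b H4. exact: H4. Qed.
Lemma uv : Mu *m Mv = Mu.
Proof using H3a H3b H4. by have := congr1 (mulmx Mu) H4; rewrite mulmxBr mulmx1 !mulmxA H3a mul0mx subr0. Qed.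
Lemma vu : Mv *m Mu = Mu.
Proof using H3a H3b H4. by have := congr1 (mulmx^~ Mu) H4; rewrite /= mulmxBl mul1mx -!mulmxA H3b mulmx0 subr0. Qed.
Lemma usv : Mus *m Mv = 0. Proof using H3a H3b H4. by rewrite mulmxA H3b mul0mx. Qed.
Lemma vus : Mv *m Mus = 0. Proof using H3a H3b H4. by rewrite -mulmxA H3a mulmx0. Qed.
Lemma ush : Mus *m Mh = Mus.
Proof using H3a H3b H4.
have := congr1 (mulmx Mus) H4; rewrite mulmxBr mulmx1 !mulmxA H3b mul0mx sub0r.
by rewrite mulmxN mulmxA.
Qed.
Lemma hus : Mh *m Mus = Mus.
Proof using H3a H3b H4.
have := congr1 (mulmx^~ Mus) H4; rewrite /= mulmxBl mul1mx -!mulmxA H3a mulmx0 sub0r.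
by rewrite mulNmx -!mulmxA.
Qed.
Lemma uh : Mu *m Mh = 0. Proof using H3a H3b H4. by rewrite mulmxN mulmxA H3a mul0mx oppr0. Qed.
Lemma hu : Mh *m Mu = 0. Proof using H3a H3b H4. by rewrite mulNmx -mulmxA H3b mulmx0 oppr0. Qed.
Lemma vv : Mv *m Mv = Mv. Proof using H3a H3b H4. by rewrite -mulmxA uv. Qed.
Lemma hh : Mh *m Mh = Mh. Proof using H3a H3b H4. by rewrite mulmxN mulmxA hus. Qed.
Lemma vh : Mv *m Mh = 0. Proof using H3a H3b H4. by rewrite mulmxN mulmxA vus mul0mx oppr0. Qed.
Lemma hv : Mh *m Mv = 0. Proof using H3a H3b H4. by rewrite mulmxA hu mul0mx. Qed.
Lemma hE : Mh = 1%:M - Mv. Proof using H3a H3b H4. by rewrite -vh1 addrAC subrr add0r. Qed.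

Lemma comm_decomp (X : 'M[C]_4) : X *m Mv = Mv *m X ->
  X = Mv *m X *m Mv + Mh *m X *m Mh.
Proof using H3a H3b H4.
move=> H.
have H2 : X *m Mh = Mh *m X by rewrite hE mulmxBr mulmxBl mulmx1 mul1mx H.
rewrite -{1}[X]mulmx1 -vh1 mulmxDr.
rewrite -{1}vv mulmxA H. by rewrite -{1}hh [X *m (_ *m _)]mulmxA H2.
Qed.

Lemma comm_v_of (X : 'M[C]_4) : X *m Mu = Mu *m X -> X *m Mv = Mv *m X.
Proof using H3a H3b H4. by move=> H; rewrite mulmxA H -!mulmxA H. Qed.

Lemma comm_h_of (X : 'M[C]_4) : X *m Mus = Mus *m X -> X *m Mh = Mh *m X.
Proof using H3a H3b H4. by move=> H; rewrite mulmxN mulNmx mulmxA H -!mulmxA H. Qed.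

End ProjAlg.

Section S3gen.
Variable K : rcfType.
Local Notation C := (K[i]).
Local Notation gm := (@gm K).

Lemma toCE (x : K) : toC x = x%:C. Proof. by []. Qed.

Lemma norm_collapse (F : tensor2 K) :
  \sum_(a : idx) \sum_(b : idx) \sum_(a' : idx) \sum_(b' : idx) F a b * gm a a' * gm b b' * F a' b'
  = \sum_(a : idx) \sum_(b : idx) s K a * s K b * (F a b * F a b).
Proof.
apply: eq_bigr => a _; apply: eq_bigr => b _.
rewrite (sum_collapse (m:=a)); last first.
  move=> n hn; apply: big1 => p _; rewrite (gmE _ a n) ifN_eqC //; ring.
rewrite (sum_collapse (m:=b)); first by rewrite /s; ring.
by move=> n hn; rewrite (gmE _ b n) ifN_eqC //; ring.
Qed.

Definition symm (F : tensor2 K) := forall a b, F a b = F b a.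

Lemma stab_eq (F : tensor2 K) : symm F ->
  F = stab (F i0 i0) (F i0 i1) (F i0 i2) (F i0 i3) (F i1 i1) (F i1 i2) (F i1 i3)
           (F i2 i2) (F i2 i3) (F i3 i3).
Proof.
move=> H; apply: fext2 => a b.
by idxcase a; idxcase b; rewrite /stab /= // H.
Qed.

End S3gen.

Section S3.
Variable K : rcfType.
Local Notation C := (K[i]).
Local Notation gm := (@gm K).
Variable U : idx -> idx -> K.
Hypothesis HU : simple_unit_2form U.
Local Notation u := (realT2 U).
Local Notation us := (hdual2 (realT2 U)).
Local Notation Mu := (mx u).
Local Notation Mus := (mx us).

Lemma Uanti a b : U a b = - U b a.
Proof. by case: HU => H _; apply: H. Qed.

Lemma u_anti : antisym u.
Proof. by move=> a b; rewrite /realT2 Uanti !toCE rmorphN. Qed.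

Lemma u_tab : u = atab (u i0 i1) (u i0 i2) (u i0 i3) (u i1 i2) (u i1 i3) (u i2 i3).
Proof. exact: atab_eq u_anti. Qed.

Lemma us_tab : us = atab (u i2 i3) (- u i1 i3) (u i1 i2) (- u i0 i3) (u i0 i2) (- u i0 i1).
Proof. exact: hdual2_tab u_anti. Qed.

Lemma HPu : u i0 i1 * u i2 i3 - u i0 i2 * u i1 i3 + u i0 i3 * u i1 i2 = 0.
Proof.
case: HU => _ [H _]; have := H i0 i1 i2 i3; rewrite (Uanti i3 i1) => h.
have := congr1 (real_complex K) h; rewrite rmorph0 !rmorphD !rmorphM rmorphN => h'.
rewrite /realT2 !toCE; transitivity ((U i0 i1)%:C * (U i2 i3)%:C + (U i0 i2)%:C * - (U i1 i3)%:C + (U i0 i3)%:C * (U i1 i2)%:C).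
  ring.
exact: h'.
Qed.

Lemma HEu : u i0 i1 ^+ 2 + u i0 i2 ^+ 2 + u i0 i3 ^+ 2 - u i1 i2 ^+ 2 - u i1 i3 ^+ 2 - u i2 i3 ^+ 2 = 1.
Proof.
case: HU => _ [_ H]; move: H; rewrite norm_collapse.
set x01 := u i0 i1; set x02 := u i0 i2; set x03 := u i0 i3.
set x12 := u i1 i2; set x13 := u i1 i3; set x23 := u i2 i3.
rewrite u_tab !sum4 /atab /s /Defs.gm /= => H.
have -> : x01 ^+ 2 + x02 ^+ 2 + x03 ^+ 2 - x12 ^+ 2 - x13 ^+ 2 - x23 ^+ 2 = - (2%:R^-1 *
       ((-1 * -1 * (0 * 0) + -1 * 1 * (x01 * x01) + -1 * 1 * (x02 * x02) + -1 * 1 * (x03 * x03)) +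
        (1 * -1 * (- x01 * - x01) + 1 * 1 * (0 * 0) + 1 * 1 * (x12 * x12) + 1 * 1 * (x13 * x13)) +
        (1 * -1 * (- x02 * - x02) + 1 * 1 * (- x12 * - x12) + 1 * 1 * (0 * 0) + 1 * 1 * (x23 * x23)) +
        (1 * -1 * (- x03 * - x03) + 1 * 1 * (- x13 * - x13) + 1 * 1 * (- x23 * - x23) + 1 * 1 * (0 * 0)))).
  by field.
by rewrite H opprK.
Qed.


Lemma UC3a : Mu *m Mus = 0.
Proof. by have := C3a HPu HEu; rewrite -u_tab -us_tab. Qed.
Lemma UC3b : Mus *m Mu = 0.
Proof. by have := C3b HPu HEu; rewrite -u_tab -us_tab. Qed.
Lemma UC4 : Mu *m Mu - Mus *m Mus = 1%:M.
Proof. by have := C4 HPu HEu; rewrite -u_tab -us_tab. Qed.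
Lemma UC7 : \tr (Mu *m Mu) = 2%:R.
Proof. by have := C7 HPu HEu; rewrite -u_tab. Qed.
Lemma UC5 (X : tensor2 K) : antisym X ->
  (2%:R : C) *: (Mu *m Mu *m mx X *m (Mu *m Mu)) = \tr (mx X *m Mu) *: Mu.
Proof.
move=> HX; have := C5 HPu HEu (X i0 i1) (X i0 i2) (X i0 i3) (X i1 i2) (X i1 i3) (X i2 i3).
by rewrite -u_tab -(atab_eq HX).
Qed.
Lemma UC6 (X : tensor2 K) : antisym X ->
  (2%:R : C) *: (Mus *m Mus *m mx X *m (Mus *m Mus)) = - \tr (mx X *m Mus) *: Mus.
Proof.
move=> HX; have := C6 HPu HEu (X i0 i1) (X i0 i2) (X i0 i3) (X i1 i2) (X i1 i3) (X i2 i3).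
by rewrite -us_tab -(atab_eq HX).
Qed.
Lemma UF3 (R : tensor2 K) : symm R ->
  Mu *m Mu *m mx R *m (Mu *m Mu) + Mu *m mx R *m Mu = \tr (Mu *m Mu *m mx R) *: (Mu *m Mu).
Proof.
move=> HR; have := F3 HPu HEu (R i0 i0) (R i0 i1) (R i0 i2) (R i0 i3) (R i1 i1) (R i1 i2) (R i1 i3)
           (R i2 i2) (R i2 i3) (R i3 i3).
by rewrite -u_tab -(stab_eq HR).
Qed.
Lemma UF4 (R : tensor2 K) : symm R ->
  Mus *m Mus *m mx R *m (Mus *m Mus) - Mus *m mx R *m Mus = \tr (Mus *m Mus *m mx R) *: (Mus *m Mus).
Proof.
move=> HR; have := F4 HPu HEu (R i0 i0) (R i0 i1) (R i0 i2) (R i0 i3) (R i1 i1) (R i1 i2) (R i1 i3)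
           (R i2 i2) (R i2 i3) (R i3 i3).
by rewrite -us_tab -(stab_eq HR).
Qed.

End S3.

Section Scal.
Variable K : rcfType.
Local Notation C := (K[i]).
Definition cc : C := (toC (Num.sqrt (2%:R : K)))^-1.

Lemma conjM (x y : C) : conjc (x * y) = conjc x * conjc y. Proof. exact: rmorphM. Qed.
Lemma conjB (x y : C) : conjc (x - y) = conjc x - conjc y. Proof. exact: rmorphB. Qed.
Lemma conjD (x y : C) : conjc (x + y) = conjc x + conjc y. Proof. exact: rmorphD. Qed.
Lemma conjN (x : C) : conjc (- x) = - conjc x. Proof. exact: rmorphN. Qed.
Lemma conj0 : conjc (0 : C) = 0. Proof. exact: rmorph0. Qed.

Lemma two_neq0 : (2%:R : C) != 0. Proof. by rewrite pnatr_eq0. Qed.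

Lemma cc2 : 2%:R * (cc * cc) = 1 :> C.
Proof.
rewrite /cc -invfM !toCE -rmorphM -expr2 sqr_sqrtr ?ler0n // rmorph_nat.
by rewrite mulfV // two_neq0.
Qed.

Lemma cc_neq0 : cc != 0.
Proof. by apply/eqP => h; have := cc2; rewrite h mul0r mulr0 => /eqP; rewrite eq_sym oner_eq0. Qed.

Lemma ci_sq : ci K * ci K = -1.
Proof. by rewrite /ci; apply/eqP; rewrite eq_complex /=; apply/andP; split; apply/eqP; ring. Qed.

Lemma ci_neq0 : ci K != 0.
Proof. by apply/eqP => h; have := ci_sq; rewrite h mul0r => /eqP; rewrite eq_sym oppr_eq0 oner_eq0. Qed.

Lemma conj_cc : conjc cc = cc.
Proof. by rewrite /cc conjc_inv toCE conjc_real. Qed.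

Lemma conj_ci : conjc (ci K) = - ci K.
Proof. by rewrite /ci /conjc; apply/eqP; rewrite eq_complex /=; apply/andP; split; apply/eqP; ring. Qed.

Lemma mulLC (a b c d : C) (A B : 'M[C]_4) :
  (a *: A + b *: B) *m (c *: A + d *: B) =
  (a * c) *: (A *m A) + (a * d) *: (A *m B) + (b * c) *: (B *m A) + (b * d) *: (B *m B).
Proof.
rewrite mulmxDl !mulmxDr -!scalemxAl -!scalemxAr !scalerA !addrA.
by [].
Qed.

Lemma conj_s a : conjc (s K a) = s K a.
Proof. by idxcase a; rewrite /s /Defs.gm /=; apply/eqP; rewrite eq_complex /=; apply/andP; split; apply/eqP; ring. Qed.

Lemma map_real (A : idx -> idx -> K) : map_mx conjc (mx (realT2 A)) = mx (realT2 A).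
Proof. by apply/matrixP => i j; rewrite !mxE conjM conj_s /realT2 toCE conjc_real. Qed.

End Scal.

Section S4.
Variable K : rcfType.
Local Notation C := (K[i]).
Local Notation gm := (@gm K).
Variable U : idx -> idx -> K.
Hypothesis HU : simple_unit_2form U.
Local Notation u := (realT2 U).
Local Notation us := (hdual2 (realT2 U)).
Local Notation Mu := (mx u).
Local Notation Mus := (mx us).
Local Notation cc := (cc K).
Local Notation ci := (ci K).

Lemma us_real a b : conjc (us a b) = us a b.
Proof.
rewrite (us_tab HU); idxcase a; idxcase b; rewrite /atab /=;
  by apply/eqP; rewrite eq_complex /=; apply/andP; split; apply/eqP; ring.
Qed.

Lemma map_us : map_mx conjc Mus = Mus.
Proof. by apply/matrixP => i j; rewrite !mxE conjM conj_s us_real. Qed.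

Lemma mx_sdU : mx (sdU U) = cc *: Mu + (- (cc * ci)) *: Mus.
Proof. by rewrite -mx_lin; congr mx; apply: fext2 => a b; rewrite /sdU /= -[(toC _)^-1]/cc; ring. Qed.

Lemma mx_csdU : mx (conj2 (sdU U)) = cc *: Mu + (cc * ci) *: Mus.
Proof.
rewrite -mx_lin; congr mx; apply: fext2 => a b; rewrite /conj2 /cconj /sdU /= -[(toC _)^-1]/cc.
rewrite conjM conjB conjM conj_ci us_real conj_cc /realT2 toCE conjc_real -/cc.
ring.
Qed.

Local Notation MPi := (Mu *m Mu + Mus *m Mus).

Lemma mx_Pi : mx (PiU U) = MPi.
Proof.
rewrite /PiU /scale2 mx_scale mx_dot2 mx_sdU mx_csdU mulLC.
rewrite (UC3a HU) (UC3b HU) !scaler0 !addr0 scalerDr !scalerA.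
have -> : 2%:R * (cc * cc) = 1 by exact: cc2.
have -> : 2%:R * (- (cc * ci) * (cc * ci)) = 1.
  by transitivity (- (2%:R * (cc * cc)) * (ci * ci)); [ring | rewrite cc2 ci_sq mulN1r opprK].
by rewrite !scale1r.
Qed.

Lemma mx_Pivh : mx (Pi_vh U) = MPi.
Proof.
have -> : Pi_vh U = fun a b => 1 * proj_v U a b + 1 * dot2 us us a b.
  by apply: fext2 => a b; rewrite /Pi_vh /proj_h opprK !mul1r.
by rewrite mx_lin /proj_v !mx_dot2 !scale1r.
Qed.

Lemma Pi_eq : PiU U = Pi_vh U.
Proof. by apply: mx_inj; rewrite mx_Pi mx_Pivh. Qed.

End S4.

Lemma lin2 (K : rcfType) (V : lmodType K[i]) (a b : K[i]) (x y x' y' : V) :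
  a + a != 0 -> b + b != 0 ->
  a *: x + b *: y = a *: x' + b *: y' -> a *: x - b *: y = a *: x' - b *: y' -> x = x' /\ y = y'.
Proof.
move=> ha hb h1 h2.
have e1 : forall p q : V, (p + q) + (p - q) = p + p by move=> p q; rewrite addrACA subrr addr0.
have e2 : forall p q : V, (p + q) - (p - q) = q + q.
  by move=> p q; rewrite opprB addrA addrAC (addrC p) addrK.
split.
  have : (a *: x + b *: y) + (a *: x - b *: y) = (a *: x' + b *: y') + (a *: x' - b *: y') by rewrite h1 h2.
  by rewrite !e1 -!scalerDl => /(scalerI ha).
have : (a *: x + b *: y) - (a *: x - b *: y) = (a *: x' + b *: y') - (a *: x' - b *: y') by rewrite h1 h2.
by rewrite !e2 -!scalerDl => /(scalerI hb).
Qed.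

Lemma tr_map (K : rcfType) (A : 'M[K[i]]_4) : \tr (map_mx conjc A) = conjc (\tr A).
Proof.
rewrite /mxtrace (big_morph conjc (@conjD K) (@conj0 K)); apply: eq_bigr => i _; by rewrite mxE.
Qed.

Lemma conj_comm (K : rcfType) (MR P Q : 'M[K[i]]_4) (a b : K[i]) :
  map_mx conjc MR = MR -> map_mx conjc P = P -> map_mx conjc Q = Q ->
  MR *m (a *: P + b *: Q) = (a *: P + b *: Q) *m MR ->
  MR *m (conjc a *: P + conjc b *: Q) = (conjc a *: P + conjc b *: Q) *m MR.
Proof.
move=> hR hP hQ H; have := congr1 (map_mx conjc) H.
by rewrite !map_mxM !map_mxD !map_mxZ hR hP hQ.
Qed.

Lemma real_ex (K : rcfType) (z : K[i]) : conjc z = z -> exists a, z = toC a.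
Proof.
case: z => a b; rewrite /conjc => -[hb]; exists a.
by rewrite /toC (_ : b = 0) //; lra.
Qed.

Lemma tr_step (K : rcfType) (t1 t2 : K[i]) : 0 = t1 * 2%:R + t2 * (- 2%:R) -> t2 = t1.
Proof.
move=> h; have : (t1 - t2) * 2%:R = t1 * 2%:R + t2 * (- 2%:R) by ring.
by rewrite -h => /eqP; rewrite mulf_eq0 (negbTE (two_neq0 K)) orbF subr_eq0 => /eqP.
Qed.

Lemma fin_step (K : rcfType) (V : lmodType K[i]) (x A B : V) (t1 t2 : K[i]) :
  x + x = t1 *: A + t2 *: B -> t2 = t1 -> x = (t1 / 2%:R) *: (A + B).
Proof.
move=> h ht; rewrite ht -scalerDr in h.
apply: (scalerI (two_neq0 K)); rewrite scalerA (mulrC 2%:R) mulfVK ?(two_neq0 K) //.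
by rewrite scaler_nat mulr2n h.
Qed.

Section S5.
Variable K : rcfType.
Local Notation C := (K[i]).
Local Notation gm := (@gm K).
Variable U : idx -> idx -> K.
Hypothesis HU : simple_unit_2form U.
Local Notation u := (realT2 U).
Local Notation us := (hdual2 (realT2 U)).
Local Notation Mu := (mx u).
Local Notation Mus := (mx us).
Local Notation cc := (cc K).
Local Notation ci := (ci K).
Local Notation MPi := (Mu *m Mu + Mus *m Mus).
Local Notation SS := (Mus *m Mus).

Let H3a := UC3a HU.
Let H3b := UC3b HU.
Let H4 := UC4 HU.

Lemma SS_us : SS *m Mus = - Mus.
Proof. by have := hus H3a H3b H4; rewrite mulNmx => /eqP; rewrite eqr_oppLR => /eqP. Qed.
Lemma us_SS : Mus *m SS = - Mus.
Proof. by have := ush H3a H3b H4; rewrite mulmxN => /eqP; rewrite eqr_oppLR => /eqP. Qed.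

Lemma MPi_u : MPi *m Mu = Mu.
Proof. by rewrite mulmxDl (vu H3a H3b H4) -mulmxA H3b mulmx0 addr0. Qed.
Lemma u_MPi : Mu *m MPi = Mu.
Proof. by rewrite mulmxDr (uv H3a H3b H4) mulmxA H3a mul0mx addr0. Qed.
Lemma MPi_us : MPi *m Mus = - Mus.
Proof. by rewrite mulmxDl (vus H3a H3b H4) add0r SS_us. Qed.
Lemma us_MPi : Mus *m MPi = - Mus.
Proof. by rewrite mulmxDr (usv H3a H3b H4) add0r us_SS. Qed.

Lemma MPi2 : MPi *m MPi = 1%:M.
Proof.
rewrite {1}mulmxDr !mulmxA MPi_u MPi_us mulNmx -H4; by [].
Qed.

Lemma SSE : SS = Mu *m Mu - 1%:M.
Proof. by rewrite -H4 opprB addrC subrK. Qed.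

Lemma trMPi : \tr MPi = 0.
Proof.
have e : Mu *m Mu = 1%:M + SS by rewrite -H4 subrK.
have h := UC7 HU; rewrite e mxtraceD mxtrace1 in h.
rewrite mxtraceD (UC7 HU).
have -> : \tr SS = 2%:R - 4%:R by rewrite -h; ring.
ring.
Qed.

Lemma trSS : \tr SS = - 2%:R.
Proof.
have e : Mu *m Mu = 1%:M + SS by rewrite -H4 subrK.
have h := UC7 HU; rewrite e mxtraceD mxtrace1 in h.
by rewrite -[\tr SS](addKr 4%:R) h; ring.
Qed.

Lemma SSSS : SS *m SS = - SS.
Proof. by have := hh H3a H3b H4; rewrite mulNmx mulmxN opprK. Qed.


Lemma comm_MPi (a b : C) : MPi *m (a *: Mu + b *: Mus) = (a *: Mu + b *: Mus) *m MPi.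
Proof.
by rewrite [MPi *m _]mulmxDr [_ *m MPi]mulmxDl -!scalemxAr -!scalemxAl MPi_u u_MPi MPi_us us_MPi.
Qed.

Lemma part_i (Ric : idx -> idx -> K) (HRsym : forall a b, Ric a b = Ric b a) :
  EM_type Ric U <->
  [/\ realT2 Ric <> (fun _ _ => 0), tr2 (realT2 Ric) = 0 &
      dot2 (realT2 Ric) (sdU U) = dot2 (sdU U) (realT2 Ric)].
Proof.
split.
- move=> [k [hk HR]].
  have hk' : toC k != 0 by rewrite toCE fmorph_eq0.
  have Hmx : mx (realT2 Ric) = (- toC k) *: MPi by rewrite HR /scale2 mx_scale (mx_Pi HU).
  split.
  + move=> H0; have : mx (realT2 Ric) = 0 by rewrite H0 mx0.
    rewrite Hmx => /eqP; rewrite scaler_eq0 oppr_eq0 (negbTE hk') /= => /eqP hP.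
    have := MPi2; rewrite hP mul0mx => /matrixP /(_ i0 i0); rewrite !mxE /=.
    by move=> /eqP; rewrite eq_sym oner_eq0.
  + by rewrite tr2_mx Hmx mxtraceZ trMPi mulr0.
  + apply: mx_inj; rewrite !mx_dot2 Hmx (mx_sdU U) -scalemxAl -scalemxAr.
    by rewrite comm_MPi.
- move=> [HR0 Htr Hcomm].
  set MR := mx (realT2 Ric).
  set d := - (cc * ci).
  have hd : d != 0 by rewrite oppr_eq0 mulf_neq0 // ?cc_neq0 ?ci_neq0.
  have E1 : MR *m (cc *: Mu + d *: Mus) = (cc *: Mu + d *: Mus) *m MR.
    by rewrite -(mx_sdU U) -!mx_dot2 Hcomm.
  have E2 : MR *m (cc *: Mu - d *: Mus) = (cc *: Mu - d *: Mus) *m MR.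
    have := conj_comm (map_real Ric) (map_real U) (map_us HU) E1.
    rewrite conj_cc.
    have -> : conjc d = - d by rewrite /d conjN conjM conj_cc conj_ci mulrN opprK.
    by rewrite scaleNr.
  move: E1 E2; rewrite mulmxDr mulmxBr mulmxDl mulmxBl -!scalemxAr -!scalemxAl => E1 E2.
  have [Hu Hus] : MR *m Mu = Mu *m MR /\ MR *m Mus = Mus *m MR.
    by apply: (lin2 _ _ E1 E2); rewrite -mulr2n mulrn_eq0 /= ?cc_neq0 ?hd.
  have Hv := comm_v_of H3a H3b H4 Hu.
  have HRs : symm (realT2 Ric) by move=> a b; rewrite /realT2 HRsym.
  have F3 := UF3 HU HRs; have F4 := UF4 HU HRs.
  set t1 := \tr (Mu *m Mu *m MR) in F3.
  set t2 := \tr (SS *m MR) in F4.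
  have HSS : MR *m SS = SS *m MR by rewrite mulmxA Hus -!mulmxA Hus.
  have e3 : MR *m (Mu *m Mu) + MR *m (Mu *m Mu) = t1 *: (Mu *m Mu).
    rewrite -F3; congr (_ + _).
      by rewrite -Hv -mulmxA (vv H3a H3b H4).
    by rewrite -Hu -!mulmxA.
  have e4 : - (MR *m SS) - MR *m SS = t2 *: SS.
    rewrite -F4; congr (_ - _).
      by rewrite -HSS -mulmxA SSSS mulmxN.
    by rewrite -Hus -!mulmxA.
  have eR : MR = MR *m (Mu *m Mu) - MR *m SS by rewrite -mulmxBr H4 mulmx1.
  have e5 : MR + MR = t1 *: (Mu *m Mu) + t2 *: SS.
    by rewrite -e3 -e4 {1 2}eR addrACA.
  have ht : t2 = t1.
    have := congr1 mxtrace e5; rewrite !mxtraceD !mxtraceZ (UC7 HU) trSS -tr2_mx Htr addr0.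
    exact: tr_step.
  have e7 : MR = (t1 / 2%:R) *: MPi := fin_step e5 ht.
  have ht1 : conjc t1 = t1.
    by rewrite /t1 -tr_map !map_mxM -[@GRing.RMorphism.sort _ _ _]/(@conjc _) !map_real.
  have [a ha] := real_ex ht1.
  exists (- (a / 2%:R)); split.
    apply/eqP => ha0; apply: HR0; apply: mx_inj; rewrite mx0 -/MR e7 ha.
    have -> : a = 0 by move/eqP: ha0; rewrite oppr_eq0 mulf_eq0 invr_eq0 pnatr_eq0 orbF => /eqP.
    by rewrite toCE rmorph0 mul0r scale0r.
  apply: mx_inj; rewrite /scale2 mx_scale (mx_Pi HU) -/MR e7 ha; congr (_ *: _).
  by rewrite !toCE rmorphN opprK fmorph_div rmorph_nat.
Qed.

End S5.

Section WK.
Variable K : rcfType.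
Variable W : idx -> idx -> idx -> idx -> K.
Hypothesis HA : forall a b c d, W a b c d = - W b a c d.
Hypothesis HPs : forall a b c d, W a b c d = W c d a b.

Definition ordp (a b : idx) : K * idx * idx :=
  if (val a < val b)%N then (1, a, b) else if (val b < val a)%N then (-1, b, a) else (0, a, b).

Definition Wcan (a b c d : idx) : K :=
  let: (s1, p, q) := ordp a b in let: (s2, r, t) := ordp c d in
  if ((val p < val r) || ((val p == val r) && (val q <= val t)))%N
  then s1 * s2 * W p q r t else s1 * s2 * W r t p q.

Lemma HA2 a b c d : W a b c d = - W a b d c.
Proof. by rewrite HPs HA HPs. Qed.

Lemma ordp1 a b c d : W a b c d = (ordp a b).1.1 * W (ordp a b).1.2 (ordp a b).2 c d.
Proof using HA.
rewrite /ordp; case: ltngtP => h /=; first by rewrite mul1r.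
  by rewrite HA mulN1r.
have -> : a = b by apply: val_inj.
have := HA b b c d; rewrite mul0r; lra.
Qed.

Lemma ordp2 a b c d : W a b c d = (ordp c d).1.1 * W a b (ordp c d).1.2 (ordp c d).2.
Proof using HA HPs.
rewrite /ordp; case: ltngtP => h /=; first by rewrite mul1r.
  by rewrite HA2 mulN1r.
have -> : c = d by apply: val_inj.
have := HA2 a b d d; rewrite mul0r; lra.
Qed.

Lemma Wcan_eq a b c d : W a b c d = Wcan a b c d.
Proof using HA HPs.
rewrite /Wcan (ordp1 a b c d).
case: (ordp a b) => [[s1 p] q] /=; rewrite (ordp2 p q c d).
case: (ordp c d) => [[s2 r] t] /=.
by case: ifP => _ //; rewrite mulrA (HPs p q r t).
Qed.


Definition atabR (R : zmodType) (y01 y02 y03 y12 y13 y23 : R) (a b : idx) : R :=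
  match val a, val b with
  | 0, 1 => y01 | 1, 0 => - y01
  | 0, 2 => y02 | 2, 0 => - y02
  | 0, 3 => y03 | 3, 0 => - y03
  | 1, 2 => y12 | 2, 1 => - y12
  | 1, 3 => y13 | 3, 1 => - y13
  | 2, 3 => y23 | 3, 2 => - y23
  | _, _ => 0
  end.

Definition hdK (a b c d : idx) : K :=
  atabR (W i2 i3 c d) (- W i1 i3 c d) (W i1 i2 c d) (- W i0 i3 c d) (W i0 i2 c d) (- W i0 i1 c d) a b.

Hypothesis Hcyc : W i0 i1 i2 i3 + W i0 i2 i3 i1 + W i0 i3 i1 i2 = 0.
Hypothesis Htr : forall a c, - W a i0 c i0 + W a i1 c i1 + W a i2 c i2 + W a i3 c i3 = 0.

Lemma hdK_pair a b c d : hdK a b c d = hdK c d a b.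
Proof using HA HPs Hcyc Htr.
have c0 := Hcyc.
have t00 := Htr i0 i0; have t01 := Htr i0 i1; have t02 := Htr i0 i2; have t03 := Htr i0 i3.
have t10 := Htr i1 i0; have t11 := Htr i1 i1; have t12 := Htr i1 i2; have t13 := Htr i1 i3.
have t20 := Htr i2 i0; have t21 := Htr i2 i1; have t22 := Htr i2 i2; have t23 := Htr i2 i3.
have t30 := Htr i3 i0; have t31 := Htr i3 i1; have t32 := Htr i3 i2; have t33 := Htr i3 i3.
rewrite !Wcan_eq /Wcan /= in c0 t00 t01 t02 t03 t10 t11 t12 t13 t20 t21 t22 t23 t30 t31 t32 t33.
clear Hcyc Htr.
idxcase a; idxcase b; idxcase c; idxcase d; rewrite /hdK /atabR /= ?Wcan_eq /Wcan /=;
  first [ring | lra].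
Qed.


Definition sK (a : idx) : K := if val a == 0%N then -1 else 1.

Lemma hdK_tr : \sum_(a : idx) \sum_(b : idx) sK a * sK b * hdK a b a b = 0.
Proof using HA HPs Hcyc.
have c0 := Hcyc; rewrite !Wcan_eq /Wcan /= in c0.
rewrite !sum4 /hdK /atabR /sK /= !Wcan_eq /Wcan /=; lra.
Qed.

End WK.

Ltac cplx := apply/eqP; rewrite eq_complex /=; apply/andP; split; apply/eqP; ring.

Section S7.
Variable K : rcfType.
Local Notation C := (K[i]).
Local Notation gm := (@gm K).

Lemma s0v : s K i0 = -1. Proof. by rewrite /s /Defs.gm /=. Qed.
Lemma s1v : s K i1 = 1. Proof. by rewrite /s /Defs.gm /=. Qed.
Lemma s2v : s K i2 = 1. Proof. by rewrite /s /Defs.gm /=. Qed.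
Lemma s3v : s K i3 = 1. Proof. by rewrite /s /Defs.gm /=. Qed.

Lemma fext4 (A B : tensor4 K) : (forall a b c d, A a b c d = B a b c d) -> A = B.
Proof. by move=> H; do 4 (apply: functional_extensionality => ?); apply: H. Qed.

Lemma gm_collapse2 (X : idx -> idx -> C) :
  \sum_(b : idx) \sum_(d : idx) gm b d * X b d = \sum_(b : idx) s K b * X b b.
Proof.
apply: eq_bigr => b _; rewrite (sum_collapse (m:=b)) //.
by move=> n hn; rewrite gmE ifN_eqC // mul0r.
Qed.

Lemma Tr4_collapse (P : tensor4 K) :
  Tr4 P = 2%:R^-1 * \sum_(a : idx) \sum_(b : idx) s K a * s K b * P a b a b.
Proof.
congr (_ * _); apply: eq_bigr => a _; apply: eq_bigr => b _.
rewrite (sum_collapse (m:=a)); last first.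
  move=> n hn; apply: big1 => p _; rewrite (gmE _ a n) ifN_eqC //; ring.
rewrite (sum_collapse (m:=b)); first by rewrite /s.
by move=> n hn; rewrite (gmE _ b n) ifN_eqC //; ring.
Qed.

Lemma Tr4_lin (al be : C) (P Q : tensor4 K) :
  Tr4 (fun a b c d => al * P a b c d + be * Q a b c d) = al * Tr4 P + be * Tr4 Q.
Proof. rewrite !Tr4_collapse !sum4; ring. Qed.

Lemma gm_sym a b : gm a b = gm b a.
Proof. by rewrite !gmE eq_sym; case: eqP => // ->. Qed.

Lemma Gt_anti a b c d : Gt K a b c d = - Gt K b a c d.
Proof. rewrite /Gt /wedge; ring. Qed.

Lemma Gt_pair a b c d : Gt K a b c d = Gt K c d a b.
Proof. rewrite /Gt /wedge (gm_sym c a) (gm_sym d b) (gm_sym c b) (gm_sym d a); ring. Qed.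

Lemma vol_anti a b c d : vol K a b c d = - vol K b a c d.
Proof. rewrite !volE; idxcase a; idxcase b; idxcase c; idxcase d; rewrite /vtab /=; ring. Qed.

Lemma vol_pair a b c d : vol K a b c d = vol K c d a b.
Proof. rewrite !volE; idxcase a; idxcase b; idxcase c; idxcase d; rewrite /vtab /=; ring. Qed.

End S7.

Section HD.
Variable K : rcfType.
Local Notation C := (K[i]).
Local Notation ci := (ci K).

Lemma hdual2_anti (F : tensor2 K) : antisym F -> antisym (hdual2 F).
Proof. by move=> HF; rewrite hdual2_tab //; exact: atab_antisym. Qed.

Lemma hdual2K (F : tensor2 K) : antisym F -> hdual2 (hdual2 F) = fun a b => - F a b.
Proof.
move=> HF; rewrite (hdual2_tab (hdual2_anti HF)) (hdual2_tab HF).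
apply: fext2 => a b; rewrite [in RHS](atab_eq HF).
by idxcase a; idxcase b; rewrite /atab /=; ring.
Qed.

Lemma hdual2_lin (al be : C) (A B : tensor2 K) : antisym A -> antisym B ->
  hdual2 (fun a b => al * A a b + be * B a b) = fun a b => al * hdual2 A a b + be * hdual2 B a b.
Proof.
move=> HA HB.
have HC : antisym (fun a b => al * A a b + be * B a b) by move=> a b; rewrite (HA a b) (HB a b); ring.
rewrite (hdual2_tab HC) (hdual2_tab HA) (hdual2_tab HB).
by apply: fext2 => a b; idxcase a; idxcase b; rewrite /atab /=; ring.
Qed.

Lemma sd_anti (Y : tensor2 K) : antisym Y ->
  antisym (fun a b => 2%:R^-1 * (Y a b - ci * hdual2 Y a b)).
Proof. by move=> HY a b; rewrite (HY a b) (hdual2_anti HY a b); ring. Qed.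

Lemma sd_form (Y : tensor2 K) : antisym Y ->
  hdual2 (fun a b => 2%:R^-1 * (Y a b - ci * hdual2 Y a b)) =
  fun a b => ci * (2%:R^-1 * (Y a b - ci * hdual2 Y a b)).
Proof.
move=> HY.
have -> : (fun a b => 2%:R^-1 * (Y a b - ci * hdual2 Y a b)) =
          fun a b => 2%:R^-1 * Y a b + (- (2%:R^-1 * ci)) * hdual2 Y a b.
  by apply: fext2 => a b; ring.
rewrite hdual2_lin //; last exact: hdual2_anti HY.
rewrite (hdual2K HY).
apply: fext2 => a b.
transitivity (2%:R^-1 * ci * Y a b + - (2%:R^-1) * (ci * ci) * hdual2 Y a b); last ring.
rewrite ci_sq; ring.
Qed.

Lemma Gslice_anti c d : antisym (fun a b => Gt K a b c d).
Proof. by move=> a b; rewrite Gt_anti. Qed.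

Lemma hdG c d : hdual2 (fun a b => Gt K a b c d) = fun a b => volT K a b c d.
Proof.
rewrite (hdual2_tab (Gslice_anti c d)); apply: fext2 => a b.
by idxcase a; idxcase b; idxcase c; idxcase d;
  rewrite /atab /Gt /wedge /volT volE /vtab /Defs.gm /=; field.
Qed.

Lemma sdG_slice c d : (fun a b => sdG K a b c d) =
  fun a b => 2%:R^-1 * (Gt K a b c d - ci * hdual2 (fun x y => Gt K x y c d) a b).
Proof. by rewrite hdG. Qed.

Lemma Tr_sdG : Tr4 (sdG K) = 3%:R.
Proof.
rewrite Tr4_collapse !sum4 /sdG /Gt /wedge /volT !volE /vtab /s /Defs.gm /=; field; rewrite ?pnatr_eq0 //.
Qed.

Lemma sdG_pair a b c d : sdG K a b c d = sdG K c d a b.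
Proof. by rewrite /sdG Gt_pair /volT vol_pair. Qed.

End HD.

Section S8.
Variable K : rcfType.
Local Notation C := (K[i]).
Local Notation ci := (ci K).
Variable W : idx -> idx -> idx -> idx -> K.
Hypothesis HW : weyl_tensor W.

Lemma WA a b c d : W a b c d = - W b a c d.
Proof. by case: HW. Qed.
Lemma WPs a b c d : W a b c d = W c d a b.
Proof. by case: HW => _ []. Qed.
Lemma Wcy : W i0 i1 i2 i3 + W i0 i2 i3 i1 + W i0 i3 i1 i2 = 0.
Proof. by case: HW => _ [_ [H _]]; apply: H. Qed.
Lemma WtrK a c : - W a i0 c i0 + W a i1 c i1 + W a i2 c i2 + W a i3 c i3 = 0.
Proof.
case: HW => _ [_ [_ H]]; have := H a c; rewrite gm_collapse2 sum4 s0v s1v s2v s3v /realT4.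
move/(congr1 (@complex.Re K)) => /= h; lra.
Qed.

Lemma slice_anti c d : antisym (fun a b => realT4 W a b c d).
Proof. by move=> a b; rewrite /realT4 WA !toCE rmorphN. Qed.

Lemma hdual4_real : hdual4 (realT4 W) = realT4 (hdK W).
Proof.
apply: fext4 => a b c d.
change (hdual2 (fun x y => realT4 W x y c d) a b = toC (hdK W a b c d)).
rewrite (hdual2_tab (slice_anti c d)) /hdK.
by idxcase a; idxcase b; rewrite /atab /atabR /realT4 /=; cplx.
Qed.

Lemma sdW_pair a b c d : sdW (realT4 W) a b c d = sdW (realT4 W) c d a b.
Proof.
rewrite /sdW hdual4_real /realT4 (WPs a b c d).
by rewrite (hdK_pair WA WPs Wcy WtrK a b c d).
Qed.

Lemma TrW : Tr4 (realT4 W) = 0.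
Proof.
have h0 := WtrK i0 i0; have h1 := WtrK i1 i1; have h2 := WtrK i2 i2; have h3 := WtrK i3 i3.
rewrite Tr4_collapse; apply/eqP; rewrite mulf_eq0; apply/orP; right; apply/eqP.
rewrite !sum4 s0v s1v s2v s3v /realT4.
apply/eqP; rewrite eq_complex /=; apply/andP; split; apply/eqP; lra.
Qed.

Lemma TrsW : Tr4 (hdual4 (realT4 W)) = 0.
Proof.
have h := hdK_tr WA WPs Wcy; rewrite !sum4 /sK /= in h.
rewrite hdual4_real Tr4_collapse; apply/eqP; rewrite mulf_eq0; apply/orP; right; apply/eqP.
rewrite !sum4 s0v s1v s2v s3v /realT4.
apply/eqP; rewrite eq_complex /=; apply/andP; split; apply/eqP; lra.
Qed.

Lemma Tr_sdW : Tr4 (sdW (realT4 W)) = 0.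
Proof.
have -> : sdW (realT4 W) = fun a b c d => 2%:R^-1 * realT4 W a b c d
            + (- (2%:R^-1 * ci)) * hdual4 (realT4 W) a b c d.
  by apply: fext4 => a b c d; rewrite /sdW; ring.
by rewrite Tr4_lin TrW TrsW; ring.
Qed.

Lemma sdW_slice c d : (fun a b => sdW (realT4 W) a b c d) =
  fun a b => 2%:R^-1 * (realT4 W a b c d - ci * hdual2 (fun x y => realT4 W x y c d) a b).
Proof. by []. Qed.

End S8.

Section Gen9.
Variable K : rcfType.
Local Notation C := (K[i]).

Lemma negneg (A B D : 'M[C]_4) : (- A) *m B *m (- D) = A *m B *m D.
Proof. by rewrite !mulNmx mulmxN opprK. Qed.

Lemma dbl_inj (V : lmodType C) (x y : V) : x + x = y + y -> x = y.
Proof.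
move=> h; apply: (scalerI (two_neq0 K)); by rewrite !scaler_nat !mulr2n h.
Qed.

Lemma dot2_sym_anti (A : tensor2 K) : antisym A -> symm (dot2 A A).
Proof. by move=> HA a b; rewrite !dot2E; apply: eq_bigr => m _; rewrite (HA a m) (HA m b); ring. Qed.

Lemma dot2_scalel (k : C) (A B : tensor2 K) :
  dot2 (fun a b => k * A a b) B = fun a b => k * dot2 A B a b.
Proof. by apply: fext2 => a b; rewrite !dot2E mulr_sumr; apply: eq_bigr => m _; ring. Qed.

Lemma symPiP_collapse (Pi : tensor2 K) (P : tensor4 K) l n g d :
  symPiP Pi P l n g d = 2%:R^-1 * (dot2 (fun a b => P a b g d) Pi n l + dot2 (fun a b => P a b g d) Pi l n).
Proof.
rewrite /symPiP !dot2E -big_split; congr (_ * _); apply: eq_bigr => mu _ /=.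
rewrite (sum_collapse (m:=mu)); first by rewrite /s; ring.
by move=> m hm; rewrite gmE ifN_eqC // !mul0r add0r.
Qed.

Lemma comm_of_sym (X Pi : tensor2 K) : antisym X -> symm Pi ->
  (forall l n, dot2 X Pi n l + dot2 X Pi l n = 0) -> dot2 X Pi = dot2 Pi X.
Proof.
move=> HX HPi H; apply: fext2 => a b.
have : dot2 X Pi a b = - dot2 X Pi b a by apply/eqP; rewrite -addr_eq0; apply/eqP; apply: H.
move=> ->; rewrite !dot2E -sumrN; apply: eq_bigr => m _; rewrite (HX b m) (HPi m a); ring.
Qed.

Lemma ss_tr (X Y : tensor2 K) : antisym Y ->
  \sum_(a : idx) \sum_(b : idx) s K a * s K b * (X a b * Y a b) = - \tr (mx X *m mx Y).
Proof.
move=> HY; rewrite /mxtrace -sumrN; apply: eq_bigr => a _; rewrite !mxE -sumrN.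
by apply: eq_bigr => b _; rewrite !mxE (HY b a); ring.
Qed.

Lemma Tr4_zero_comp (Q : tensor4 K) : Tr4 (comp4 (fun _ _ _ _ => 0) Q) = 0.
Proof.
have -> : comp4 (fun _ _ _ _ => 0) Q = fun _ _ _ _ => 0.
  apply: fext4 => a b c d; rewrite /comp4 big1 ?mulr0 // => m _; rewrite big1 // => n _.
  rewrite big1 // => m' _; rewrite big1 // => n' _; ring.
by rewrite Tr4_collapse !sum4; ring.
Qed.

End Gen9.

Section SD.
Variable K : rcfType.
Local Notation C := (K[i]).
Variable U : idx -> idx -> K.
Hypothesis HU : simple_unit_2form U.
Local Notation u := (realT2 U).
Local Notation us := (hdual2 (realT2 U)).
Local Notation Mu := (mx u).
Local Notation Mus := (mx us).
Local Notation cc := (cc K).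
Local Notation ci := (ci K).
Local Notation MPi := (Mu *m Mu + Mus *m Mus).
Local Notation SS := (Mus *m Mus).

Let H3a := UC3a HU.
Let H3b := UC3b HU.
Let H4 := UC4 HU.

Lemma us_anti : antisym us.
Proof. exact: hdual2_anti (u_anti HU). Qed.

Lemma tr_coef (p q : C) : \tr ((p *: Mu + q *: Mus) *m Mu) = p * 2%:R.
Proof.
by rewrite mulmxDl -!scalemxAl mxtraceD !mxtraceZ (UC7 HU) H3b mxtrace0 mulr0 addr0.
Qed.

Lemma sdU_lin : sdU U = fun a b => cc * u a b + (- (cc * ci)) * us a b.
Proof. by apply: fext2 => a b; rewrite /sdU -[(toC _)^-1]/cc; ring. Qed.

Lemma SD (X : tensor2 K) : antisym X -> hdual2 X = (fun a b => ci * X a b) ->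
  mx X *m MPi = MPi *m mx X ->
  X = fun a b => (\tr (mx X *m Mu) / 2%:R / cc) * sdU U a b.
Proof.
move=> HX Hsd Hc.
set MX := mx X.
have eP : MPi = (Mu *m Mu + Mu *m Mu) - 1%:M by rewrite (SSE HU) addrA.
have Hv : MX *m (Mu *m Mu) = Mu *m Mu *m MX.
  apply: dbl_inj; move: Hc; rewrite eP mulmxBr mulmxBl mulmx1 mul1mx mulmxDr mulmxDl.
  by move/addIr.
have dec := comm_decomp H3a H3b H4 Hv.
rewrite negneg in dec.
have h5 := UC5 HU HX; have h6 := UC6 HU HX.
set al := \tr (MX *m Mu) in h5 *; set be := \tr (MX *m Mus) in h6.
have e2 : MX = (al / 2%:R) *: Mu + (- be / 2%:R) *: Mus.
  apply: (scalerI (two_neq0 K)); rewrite scalerDr !scalerA.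
  rewrite (mulrC 2%:R (al / _)) (mulrC 2%:R (- be / _)) !mulfVK ?(two_neq0 K) //.
  by rewrite -h5 -h6 -scalerDr -dec.
have eX : X = fun a b => (al / 2%:R) * u a b + (- be / 2%:R) * us a b.
  by apply: mx_inj; rewrite mx_lin.
have Hsd2 := Hsd; rewrite {1}eX in Hsd2.
rewrite hdual2_lin in Hsd2; [| exact: u_anti HU | exact: us_anti].
rewrite (hdual2K (u_anti HU)) in Hsd2.
have Hm := congr1 (@mx K) Hsd2.
have e3 : (- (- be / 2%:R)) *: Mu + (al / 2%:R) *: Mus
          = (ci * (al / 2%:R)) *: Mu + (ci * (- be / 2%:R)) *: Mus.
  rewrite -!mx_lin; rewrite (_ : (fun a b => - (- be / 2%:R) * u a b + al / 2%:R * us a b) =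
     (fun a b => al / 2%:R * us a b + - be / 2%:R * - u a b)); last by apply: fext2 => a b; ring.
  rewrite Hm; congr mx; apply: fext2 => a b; rewrite {1}eX; ring.
have := congr1 (fun M => \tr (M *m Mu)) e3; rewrite /= !tr_coef => h.
have hb : - be / 2%:R = - ci * (al / 2%:R).
  have : (- (- be / 2%:R)) = ci * (al / 2%:R).
    by apply: (mulIf (two_neq0 K)).
  by move=> h'; rewrite -[LHS]opprK h' mulNr.
rewrite eX sdU_lin; apply: fext2 => a b; rewrite hb.
rewrite mulrA (mulrC (al / 2%:R / cc)) !mulrA.
have hcc := cc_neq0 K.
field.
by [].
Qed.

End SD.

Section S10.
Variable K : rcfType.
Local Notation C := (K[i]).
Variable U : idx -> idx -> K.
Hypothesis HU : simple_unit_2form U.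
Local Notation u := (realT2 U).
Local Notation us := (hdual2 (realT2 U)).
Local Notation Mu := (mx u).
Local Notation Mus := (mx us).
Local Notation cc := (cc K).
Local Notation ci := (ci K).
Local Notation MPi := (Mu *m Mu + Mus *m Mus).
Local Notation SS := (Mus *m Mus).

Lemma sdU_anti : antisym (sdU U).
Proof.
rewrite sdU_lin => a b; rewrite (u_anti HU a b) (us_anti HU a b); ring.
Qed.

Lemma UUPi_anti : antisym (dot2 (sdU U) (Pi_vh U)).
Proof.
have -> : dot2 (sdU U) (Pi_vh U) = fun a b => cc * u a b + (cc * ci) * us a b.
  apply: mx_inj; rewrite mx_lin mx_dot2 (mx_Pivh U) (mx_sdU U).
  rewrite mulmxDl -!scalemxAl (u_MPi HU) (us_MPi HU) scalerN scaleNr opprK //.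
move=> a b; rewrite (u_anti HU a b) (us_anti HU a b); ring.
Qed.

Lemma q0 : \sum_(a : idx) \sum_(b : idx) s K a * s K b * (sdU U a b * sdU U a b) = - 2%:R.
Proof.
rewrite (ss_tr _ sdU_anti) (mx_sdU U) mulLC (UC3a HU) (UC3b HU) !scaler0 !addr0.
rewrite mxtraceD !mxtraceZ (UC7 HU) (trSS HU).
transitivity (- (2%:R * (cc * cc)) + (2%:R * (cc * cc)) * (ci * ci)); first ring.
rewrite cc2 ci_sq; ring.
Qed.

Lemma Tr_tens : Tr4 (tens22 (sdU U) (sdU U)) = -1.
Proof.
rewrite Tr4_collapse /tens22.
have -> : \sum_(a : idx) \sum_(b : idx) s K a * s K b * (sdU U a b * sdU U a b) = - 2%:R by exact: q0.
by rewrite mulrN mulVf ?two_neq0.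
Qed.

End S10.

Section Final.
Variable K : rcfType.
Local Notation C := (K[i]).
Local Notation ci := (ci K).
Local Notation cc := (cc K).

Lemma lin_sd (A B : tensor2 K) (k : C) : antisym A -> antisym B ->
  hdual2 A = (fun a b => ci * A a b) -> hdual2 B = (fun a b => ci * B a b) ->
  hdual2 (fun a b => A a b + k * B a b) = fun a b => ci * (A a b + k * B a b).
Proof.
move=> HA HB hA hB.
have -> : (fun a b => A a b + k * B a b) = fun a b => 1 * A a b + k * B a b by apply: fext2 => a b; ring.
by rewrite hdual2_lin // hA hB; apply: fext2 => a b; ring.
Qed.

Lemma lin_anti (A B : tensor2 K) (k : C) : antisym A -> antisym B ->
  antisym (fun a b => A a b + k * B a b).
Proof. by move=> HA HB a b; rewrite (HA a b) (HB a b); ring. Qed.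

Variable W : idx -> idx -> idx -> idx -> K.
Hypothesis HW : weyl_tensor W.

Lemma sdWs_anti c d : antisym (fun a b => sdW (realT4 W) a b c d).
Proof. by rewrite (sdW_slice W c d); exact: sd_anti (slice_anti HW c d). Qed.
Lemma sdWs_sd c d : hdual2 (fun a b => sdW (realT4 W) a b c d) = fun a b => ci * sdW (realT4 W) a b c d.
Proof. by rewrite (sdW_slice W c d); exact: sd_form (slice_anti HW c d). Qed.
Lemma sdGs_anti c d : antisym (fun a b => sdG K a b c d).
Proof. by rewrite (sdG_slice K c d); exact: sd_anti (Gslice_anti K c d). Qed.
Lemma sdGs_sd c d : hdual2 (fun a b => sdG K a b c d) = fun a b => ci * sdG K a b c d.
Proof.
have h := sd_form (Gslice_anti K c d).
rewrite -(sdG_slice K c d) in h; rewrite h.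
by apply: fext2 => a b; move: (congr1 (fun F => F a b) (sdG_slice K c d)) => /= ->.
Qed.

Lemma Ps_anti c d : antisym (fun a b => Ptens W a b c d).
Proof. rewrite /Ptens; exact: (lin_anti _ (sdWs_anti c d) (sdGs_anti c d)). Qed.
Lemma Ps_sd c d : hdual2 (fun a b => Ptens W a b c d) = fun a b => ci * Ptens W a b c d.
Proof. rewrite /Ptens; exact: (lin_sd _ (sdWs_anti c d) (sdGs_anti c d) (sdWs_sd c d) (sdGs_sd c d)). Qed.

Lemma P_pair a b c d : Ptens W a b c d = Ptens W c d a b.
Proof. by rewrite /Ptens (sdW_pair HW) sdG_pair. Qed.

Lemma TrP : Tr4 (Ptens W) = b_inv W / a_inv W * 3%:R.
Proof.
have -> : Ptens W = fun a b c d => 1 * sdW (realT4 W) a b c d + (b_inv W / a_inv W) * sdG K a b c d.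
  by apply: fext4 => a b c d; rewrite /Ptens mul1r.
by rewrite Tr4_lin (Tr_sdW HW) Tr_sdG; ring.
Qed.

End Final.

Lemma Pivh_sym (K : rcfType) (U : idx -> idx -> K) : simple_unit_2form U -> symm (Pi_vh U).
Proof.
move=> HU a b; rewrite /Pi_vh /proj_v /proj_h !opprK.
by rewrite (dot2_sym_anti (u_anti HU)) (dot2_sym_anti (us_anti HU)).
Qed.

Lemma part_ii (K : rcfType) (W : idx -> idx -> idx -> idx -> K) (HW : weyl_tensor W)
  (U : idx -> idx -> K) (HU : simple_unit_2form U) :
  typeD_principal W (Pi_vh U) <->
  (a_inv W != 0 /\ forall l n g d : idx, symPiP (Pi_vh U) (Ptens W) l n g d = 0).
Proof.
split.
- move=> [U' [HU' [HPi H]]]; case: H => hrho HWW.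
  split.
    apply/eqP => ha; move: hrho; by rewrite ha invr0 mulr0 eqxx.
  move=> l n g d; rewrite -HPi (Pi_eq HU') symPiP_collapse.
  have -> : (fun a b => Ptens W a b g d) =
            fun a b => (3%:R * (- b_inv W / a_inv W) * sdU U' g d) * sdU U' a b.
    by apply: fext2 => a b; rewrite /Ptens HWW /tens22; ring.
  by rewrite dot2_scalel (UUPi_anti HU' l n); ring.
- move=> [ha HP].
  exists U; split; first exact: HU.
  split; first exact: Pi_eq HU.
  cbv zeta.
  set ka := b_inv W / a_inv W.
  set kf := fun c d => \tr (mx (fun a b => Ptens W a b c d) *m mx (realT2 U)) / 2%:R / cc K.
  have Hk : forall a b c d, Ptens W a b c d = kf c d * sdU U a b.
    move=> a b c d.
    have HX : (fun a b => Ptens W a b c d) = fun a b => kf c d * sdU U a b.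
      apply: (SD HU (Ps_anti HW c d) (Ps_sd HW c d)).
      have Hs : forall l n, dot2 (fun a b => Ptens W a b c d) (Pi_vh U) n l
                          + dot2 (fun a b => Ptens W a b c d) (Pi_vh U) l n = 0.
        move=> l n; have := HP l n c d; rewrite symPiP_collapse => /eqP.
        by rewrite mulf_eq0 invr_eq0 (negbTE (two_neq0 K)) /= => /eqP.
      have := comm_of_sym (Ps_anti HW c d) (Pivh_sym HU) Hs.
      by move/(congr1 (@mx K)); rewrite !mx_dot2 (mx_Pivh U).
    by move: (congr1 (fun F => F a b) HX).
  set mu := \sum_(a : idx) \sum_(b : idx) s K a * s K b * (sdU U a b * kf a b).
  have Hkf : forall c d, kf c d = - (mu / 2%:R) * sdU U c d.
    move=> c d.
    have e1 : \sum_(a : idx) \sum_(b : idx) s K a * s K b * (sdU U a b * Ptens W a b c d)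
              = kf c d * (- 2%:R).
      rewrite -(q0 HU) mulr_sumr; apply: eq_bigr => a _; rewrite mulr_sumr.
      by apply: eq_bigr => b _; rewrite Hk; ring.
    have e2 : \sum_(a : idx) \sum_(b : idx) s K a * s K b * (sdU U a b * Ptens W a b c d)
              = mu * sdU U c d.
      rewrite /mu mulr_suml; apply: eq_bigr => a _; rewrite mulr_suml.
      by apply: eq_bigr => b _; rewrite (P_pair HW) Hk; ring.
    have e3 : kf c d * (- 2%:R) = mu * sdU U c d by rewrite -e1 e2.
    have hm2 : (- 2%:R : K[i]) != 0 by rewrite oppr_eq0 two_neq0.
    apply: (mulIf hm2); rewrite e3.
    have h2 := two_neq0 K.
    by field.
  set lam := - (mu / 2%:R).
  have HT : forall a b c d, Ptens W a b c d = lam * sdU U a b * sdU U c d.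
    by move=> a b c d; rewrite Hk Hkf /lam; ring.
  have HTr : lam * (-1) = ka * 3%:R.
    rewrite -(Tr_tens HU) -(TrP HW).
    have -> : Ptens W = fun a b c d => lam * tens22 (sdU U) (sdU U) a b c d
                                      + 0 * tens22 (sdU U) (sdU U) a b c d.
      by apply: fext4 => a b c d; rewrite HT /tens22; ring.
    by rewrite Tr4_lin; ring.
  have hlam : lam = - (ka * 3%:R) by rewrite -HTr; ring.
  have Hfin : sdW (realT4 W) = fun a b c d => 3%:R * (- b_inv W / a_inv W) * tens22 (sdU U) (sdU U) a b c d
                                + (- b_inv W / a_inv W) * sdG K a b c d.
    apply: fext4 => a b c d; have := HT a b c d; rewrite /Ptens /tens22 => h.
    have -> : sdW (realT4 W) a b c d = lam * sdU U a b * sdU U c d - ka * sdG K a b c d.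
      by rewrite -h /ka; ring.
    by rewrite hlam /ka; ring.
  split; last exact: Hfin.
  apply/eqP => hr; move: ha; rewrite /a_inv Hfin hr.
  have -> : (fun a b c d => 3%:R * 0 * tens22 (sdU U) (sdU U) a b c d + 0 * sdG K a b c d)
            = fun _ _ _ _ => 0 by apply: fext4 => a b c d; ring.
  by rewrite Tr4_zero_comp eqxx.
Qed.


Close Scope complex_scope.
Local Open Scope ring_scope.

Theorem lemma3 (K : rcfType)
    (Ric : idx -> idx -> K) (W : idx -> idx -> idx -> idx -> K)
    (HRsym : forall a b, Ric a b = Ric b a)
    (HW : weyl_tensor W) :
  (forall U : idx -> idx -> K, simple_unit_2form U ->
     (EM_type Ric U <->
        [/\ realT2 Ric <> (fun _ _ => 0), tr2 (realT2 Ric) = 0 &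
            dot2 (realT2 Ric) (sdU U) = dot2 (sdU U) (realT2 Ric)])) /\
  (forall U : idx -> idx -> K, simple_unit_2form U ->
     (typeD_principal W (Pi_vh U) <->
        (a_inv W != 0 /\
         forall l n g d : idx, symPiP (Pi_vh U) (Ptens W) l n g d = 0))).
Proof.
split=> U HU; first exact: (part_i HU HRsym).
exact: (part_ii HW HU).
Qed.
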